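(* A dual-convex $m\times n$ net in $I^3$ has the property that any two non-boundary vertices joined by an edge have equal opposite ratios with respect to that edge if and only if it has a v-parallel $m\times n$ net such that at all corresponding vertices the curvatures of the two nets are opposite and their mixed curvature vanishes.
   Context: $I^3$ is real affine 3-space with the isotropic semi-norm $\|(x,y,z)\|_i=\sqrt{x^2+y^2}$; lines and planes parallel to the $z$-axis are called isotropic, and the top view $\overline{P}$ of a point $P$ is its projection to the plane $z=0$. The isotropic angle between two non-isotropic planes is the absolute value of the difference of their slopes (tangent of the Euclidean angle with the $xy$-plane). Metric duality maps a point $P=(P^1,P^2,P^3)$ to the plane $P^*: z=P^1x+P^2y-P^3$ and vice versa. An $m\times n$ net is a collection of points $F_{ij}$, $0\le i\le m$, $0\le j\le n$, such that $F_{ij},F_{i+1,j},F_{i+1,j+1},F_{i,j+1}$ are consecutive vertices of a convex quadrilateral (face $p_{ij}$); a vertex with $i\in\{0,m\}$ or $j\in\{0,n\}$ is a boundary vertex. A convex 4-hedral angle is admissible if the isotropic line through its vertex meets its interior; an $m\times n$ net is dual-convex if $m,n\ge2$ and the planes of the four consecutive faces around each non-boundary vertex are the planes of four consecutive flat angles of an admissible 4-hedral angle. For consecutive faces $p_1,p_2,p_3,p_4$ around a non-boundary vertex, the top views $\overline{p_1^*},\dots,\overline{p_4^*}$ of the points metric dual to their planes form a closed broken line (the top view of the isotropic Gauss image); the curvature at the vertex is its oriented area $\frac12\sum_{k=1}^4\det(\overline{p_k^*},\overline{p_{k+1}^*})$, $\overline{p_5^*}=\overline{p_1^*}$. Two $m\times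 n$ nets are v-parallel if vertices with the same indices have the same top view. The mixed curvature of corresponding non-boundary vertices of two v-parallel nets is the mixed area $\frac{d}{dt}\mathrm{Area}(A+tA',B+tB',C+tC',D+tD')|_{t=0}$ of the two top views $ABCD$, $A'B'C'D'$ of their isotropic Gauss images (which have parallel corresponding sides); for boundary vertices it is set to vanish. For a non-boundary vertex and an edge $e$ emanating from it, number the consecutive faces $p_1,\dots,p_4$ around it so that $p_1\cap p_4=e$, and let $p$ be the plane spanned by the lines $p_1\cap p_3$ and $p_2\cap p_4$; the opposite ratio of the vertex with respect to $e$ is $\frac{\angle(p_1,p)}{\angle(p_3,p)}\cdot\frac{\angle(p_4,p)}{\angle(p_2,p)}$ (isotropic angles). *)

(* Defs.v *)
From HB Require Import structures.
From mathcomp Require Import all_boot all_order all_algebra.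
From mathcomp Require Import reals.
From Stdlib Require Import ClassicalEpsilon.

Set Implicit Arguments.
Unset Strict Implicit.
Unset Printing Implicit Defensive.

Import Order.TTheory GRing.Theory Num.Theory.
Local Open Scope ring_scope.

Section IsotropicNets.
Variable R : realType.

Record pt := Pt { px : R; py : R; pz : R }.

Definition padd (P Q : pt) : pt := Pt (px P + px Q) (py P + py Q) (pz P + pz Q).
Definition psub (P Q : pt) : pt := Pt (px P - px Q) (py P - py Q) (pz P - pz Q).
Definition pscale (a : R) (P : pt) : pt := Pt (a * px P) (a * py P) (a * pz P).
Definition dot (u v : pt) : R := px u * px v + py u * py v + pz u * pz v.
Definition cross (u v : pt) : pt :=
  Pt (py u * pz v - pz u * py v) (pz u * px v - px u * pz v) (px u * py v - py u * px v).
Definition det3 (u v w : pt) : R := dot (cross u v) w.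

Definition top (P : pt) : R * R := (px P, py P).

Definition aspan (A u v : pt) : pt -> Prop :=
  fun P => exists a b : R, P = padd A (padd (pscale a u) (pscale b v)).

Definition is_plane (p : pt -> Prop) : Prop :=
  exists A u v, cross u v <> Pt 0 0 0 /\ (forall P, p P <-> aspan A u v P).

(* p is the plane z = a x + b y + c (a non-isotropic plane) *)
Definition is_np (p : pt -> Prop) (a b c : R) : Prop :=
  forall P, p P <-> pz P = a * px P + b * py P + c.

(* metric duality: the plane z = a x + b y + c is P^* for P = (a, b, -c).
   For a non-isotropic plane, the coefficients are unique; they are chosen
   by (classical) description. *)
Definition dual_pl (p : pt -> Prop) : pt :=
  let t := epsilon (inhabits (0, 0, 0))
             (fun t : R * R * R => is_np p t.1.1 t.1.2 t.2) in
  Pt t.1.1 t.1.2 (- t.2).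

Definition inorm2 (u : R * R) : R := Num.sqrt (u.1 ^+ 2 + u.2 ^+ 2).

Definition iang (p q : pt -> Prop) : R :=
  let g := top (dual_pl p) in let h := top (dual_pl q) in
  inorm2 (g.1 - h.1, g.2 - h.2).

(* A, B, C, D are consecutive vertices of a convex quadrilateral:
   coplanar, and the polygon turns in the same (nonzero) sense at every vertex. *)
Definition turn (X Y Z : pt) : pt := cross (psub Y X) (psub Z Y).
Definition convex_quad (A B C D : pt) : Prop :=
  det3 (psub B A) (psub C A) (psub D A) = 0 /\
  0 < dot (turn A B C) (turn B C D) /\
  0 < dot (turn B C D) (turn C D A) /\
  0 < dot (turn C D A) (turn D A B) /\
  0 < dot (turn D A B) (turn A B C).

(* An m x n net: points F i j, 0 <= i <= m, 0 <= j <= n (values of F outside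
   this range are irrelevant). *)
Definition net (m n : nat) (F : nat -> nat -> pt) : Prop :=
  forall i j, (i < m)%N -> (j < n)%N ->
    convex_quad (F i j) (F i.+1 j) (F i.+1 j.+1) (F i j.+1).

Definition nonboundary (m n i j : nat) : Prop :=
  (0 < i)%N /\ (i < m)%N /\ (0 < j)%N /\ (j < n)%N.

Definition face (F : nat -> nat -> pt) (i j : nat) : pt -> Prop :=
  aspan (F i j) (psub (F i.+1 j) (F i j)) (psub (F i j.+1) (F i j)).

Definition vface (F : nat -> nat -> pt) (i j k : nat) : pt -> Prop :=
  match k with
  | 0 => face F i j
  | 1 => face F i.-1 j
  | 2 => face F i.-1 j.-1
  | _ => face F i j.-1
  end.

(* convex 4-hedral angle with edge directions d1, d2, d3, d4 (in cyclic order,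
   flat angles between consecutive ones): each face plane span(d_k, d_{k+1})
   has the two remaining edges strictly on one and the same side. *)
Definition convex4 (d1 d2 d3 d4 : pt) : Prop :=
  0 < det3 d1 d2 d3 * det3 d1 d2 d4 /\
  0 < det3 d2 d3 d4 * det3 d2 d3 d1 /\
  0 < det3 d3 d4 d1 * det3 d3 d4 d2 /\
  0 < det3 d4 d1 d2 * det3 d4 d1 d3.

(* admissible: the isotropic line through the vertex meets the interior
   {V + sum l_k d_k | l_k > 0} of the angle *)
Definition admissible4 (d1 d2 d3 d4 : pt) : Prop :=
  exists l1 l2 l3 l4 : R, 0 < l1 /\ 0 < l2 /\ 0 < l3 /\ 0 < l4 /\
    let w := padd (padd (pscale l1 d1) (pscale l2 d2))
                  (padd (pscale l3 d3) (pscale l4 d4)) in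
    px w = 0 /\ py w = 0.

Definition same_set (p q : pt -> Prop) : Prop := forall P, p P <-> q P.

Definition dual_convex (m n : nat) (F : nat -> nat -> pt) : Prop :=
  (2 <= m)%N /\ (2 <= n)%N /\ net m n F /\
  forall i j, nonboundary m n i j ->
    exists d1 d2 d3 d4 : pt,
      convex4 d1 d2 d3 d4 /\ admissible4 d1 d2 d3 d4 /\
      same_set (aspan (F i j) d1 d2) (vface F i j 0) /\
      same_set (aspan (F i j) d2 d3) (vface F i j 1) /\
      same_set (aspan (F i j) d3 d4) (vface F i j 2) /\
      same_set (aspan (F i j) d4 d1) (vface F i j 3).

(* r is the opposite ratio for consecutive faces p1..p4 with p1 /\ p4 = e:
   p is the plane spanned by the lines p1 /\ p3 and p2 /\ p4. *)
Definition opp_ratio (p1 p2 p3 p4 : pt -> Prop) (r : R) : Prop :=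
  exists p : pt -> Prop,
    is_plane p /\
    (forall P, (p1 P /\ p3 P) \/ (p2 P /\ p4 P) -> p P) /\
    r = iang p1 p / iang p3 p * (iang p4 p / iang p2 p).

(* opposite ratio of vertex (i,j) w.r.t. the edge in direction e:
   e = 0 : to (i+1,j), 1 : to (i,j+1), 2 : to (i-1,j), 3 : to (i,j-1).
   The edge in direction e lies on vface e and vface (e-1 mod 4), so
   p1 = vface e, p2 = vface (e+1), p3 = vface (e+2), p4 = vface (e+3). *)
Definition vopp_ratio (F : nat -> nat -> pt) (i j e : nat) (r : R) : Prop :=
  opp_ratio (vface F i j (e %% 4)) (vface F i j (e.+1 %% 4))
            (vface F i j (e.+2 %% 4)) (vface F i j (e.+3 %% 4)) r.

Definition equal_opp_ratios (m n : nat) (F : nat -> nat -> pt) : Prop :=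
  (forall i j, nonboundary m n i j -> nonboundary m n i.+1 j ->
     exists r, vopp_ratio F i j 0 r /\ vopp_ratio F i.+1 j 2 r) /\
  (forall i j, nonboundary m n i j -> nonboundary m n i j.+1 ->
     exists r, vopp_ratio F i j 1 r /\ vopp_ratio F i j.+1 3 r).

Definition det2 (u v : R * R) : R := u.1 * v.2 - u.2 * v.1.

Definition gauss (F : nat -> nat -> pt) (i j k : nat) : R * R :=
  top (dual_pl (vface F i j k)).

Definition area4 (a b c d : R * R) : R :=
  (det2 a b + det2 b c + det2 c d + det2 d a) / 2.

(* mixed area: d/dt Area(a + t a', ..., d + t d') at t = 0, written out
   (Area(. + t .) is a polynomial of degree 2 in t; this is its linear coefficient) *)
Definition mixed4 (a b c d a' b' c' d' : R * R) : R :=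
  ((det2 a b' + det2 a' b) + (det2 b c' + det2 b' c) +
   (det2 c d' + det2 c' d) + (det2 d a' + det2 d' a)) / 2.

Definition curv (F : nat -> nat -> pt) (i j : nat) : R :=
  area4 (gauss F i j 0) (gauss F i j 1) (gauss F i j 2) (gauss F i j 3).

Definition mixed_curv (F G : nat -> nat -> pt) (i j : nat) : R :=
  mixed4 (gauss F i j 0) (gauss F i j 1) (gauss F i j 2) (gauss F i j 3)
         (gauss G i j 0) (gauss G i j 1) (gauss G i j 2) (gauss G i j 3).

Definition v_parallel (m n : nat) (F G : nat -> nat -> pt) : Prop :=
  forall i j, (i <= m)%N -> (j <= n)%N -> top (F i j) = top (G i j).

End IsotropicNets.

(* Main.v *)
Require Import Defs.
From HB Require Import structures.
From mathcomp Require Import all_boot all_order all_algebra.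
From mathcomp Require Import reals.
From mathcomp Require Import ring lra zify.
From Stdlib Require Import ClassicalEpsilon.
Import Order.TTheory GRing.Theory Num.Theory.
Local Open Scope ring_scope.
Set Implicit Arguments. Unset Strict Implicit. Unset Printing Implicit Defensive.

Section P.
Variable R : realType.
Implicit Types (u v w A P : pt R).

Definition gdet u v : R := px u * py v - py u * px v.
Definition grad u v : R * R :=
  ((pz u * py v - pz v * py u) / gdet u v, (px u * pz v - px v * pz u) / gdet u v).
Definition hgt (g : R*R) (P : pt R) := g.1 * px P + g.2 * py P.

Lemma grad_u u v : gdet u v != 0 -> pz u = hgt (grad u v) u.
Proof. move=> h; rewrite /hgt /grad /gdet /= in h *. field. exact h. Qed.
Lemma grad_v u v : gdet u v != 0 -> pz v = hgt (grad u v) v.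
Proof. move=> h; rewrite /hgt /grad /gdet /= in h *. field. exact h. Qed.

Lemma pt_eq P Q : px P = px Q -> py P = py Q -> pz P = pz Q -> P = Q.
Proof. by case: P => ???; case: Q => ??? /= -> -> ->. Qed.

Lemma plane_np A u v (g : R * R) : gdet u v != 0 ->
  pz u = hgt g u -> pz v = hgt g v ->
  is_np (aspan A u v) g.1 g.2 (pz A - hgt g A).
Proof.
case: g => g1 g2 h hu hv P; split.
- case=> a [b ->] /=.
  rewrite /= hu hv /hgt /=; ring.
- move=> hP.
  exists ((px (psub P A) * py v - py (psub P A) * px v) / gdet u v).
  exists ((px u * py (psub P A) - py u * px (psub P A)) / gdet u v).
  apply: pt_eq => /=.
  + rewrite /gdet in h *; field; exact h.
  + rewrite /gdet in h *; field; exact h.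
  + rewrite hP hu hv /hgt /=. rewrite /gdet in h *. field. exact h.
Qed.

Lemma aspan_np A u v : gdet u v != 0 ->
  is_np (aspan A u v) (grad u v).1 (grad u v).2 (pz A - hgt (grad u v) A).
Proof. by move=> h; apply: plane_np => //; [apply: grad_u | apply: grad_v]. Qed.

Lemma np_unique (p : pt R -> Prop) (a b c a' b' c' : R) :
  is_np p a b c -> is_np p a' b' c' -> [/\ a = a', b = b' & c = c'].
Proof.
move=> h h'.
have key : forall x y, a * x + b * y + c = a' * x + b' * y + c'.
  move=> x y.
  have hp : p (Pt x y (a * x + b * y + c)) by apply/(h _).2.
  by have /= := (h' _).1 hp.
have e0 : c = c' by have := key 0 0; rewrite !mulr0 !add0r.
have e1 : a = a'.
  by have := key 1 0; rewrite !mulr1 !mulr0 !addr0 e0 => /addIr.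
have e2 : b = b'.
  by have := key 0 1; rewrite !mulr1 !mulr0 !add0r e0 => /addIr.
by [].
Qed.

Lemma dual_top (p : pt R -> Prop) (a b c : R) : is_np p a b c -> top (dual_pl p) = (a, b).
Proof.
move=> h; rewrite /dual_pl /top /=.
set t := epsilon _ _.
have ht : is_np p t.1.1 t.1.2 t.2.
  rewrite /t; apply: (@epsilon_spec _ _ (fun t : R*R*R => is_np p t.1.1 t.1.2 t.2)).
  by exists (a, b, c).
by case: (np_unique ht h) => -> -> _.
Qed.

Lemma dual_aspan A u v : gdet u v != 0 -> top (dual_pl (aspan A u v)) = grad u v.
Proof. by move=> h; rewrite (dual_top (aspan_np A h)); case: (grad u v). Qed.

End P.

Section P.
Variable R : realType.
Implicit Types (u v w A P : pt R).

Definition dif (a b : R * R) : R * R := (a.1 - b.1, a.2 - b.2).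
Definition dot2 (a b : R * R) : R := a.1 * b.1 + a.2 * b.2.

Lemma pos_prod (x y : R) : 0 < x * y -> x != 0.
Proof. by apply: contraTneq => ->; rewrite mul0r ltxx. Qed.
Lemma pos_prod_r (x y : R) : 0 < x * y -> y != 0.
Proof. by apply: contraTneq => ->; rewrite mulr0 ltxx. Qed.
Lemma sq_pos (x : R) : x != 0 -> 0 < x * x.
Proof. move=> h; rewrite -expr2 lt_def sqrf_eq0 h /=; exact: sqr_ge0. Qed.

Lemma trans_sign (x y z : R) : 0 < x * y -> 0 < y * z -> 0 < x * z.
Proof.
move=> h1 h2; have hy := pos_prod_r h1.
have h3 : 0 < (x * z) * (y * y) by have := mulr_gt0 h1 h2; rewrite (_ : x * y * (y * z) = x * z * (y * y)) //; ring.
have hy2 := sq_pos hy. nra.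
Qed.

Lemma perp_param (e t : R * R) : t.1 * t.1 + t.2 * t.2 != 0 ->
  dot2 e t = 0 ->
  e = (- (det2 t e / (t.1 * t.1 + t.2 * t.2)) * t.2,
       (det2 t e / (t.1 * t.1 + t.2 * t.2)) * t.1).
Proof.
case: e t => [e1 e2] [t1 t2] /= h hd; rewrite /det2 /=.
congr pair.
- apply/eqP; rewrite -subr_eq0; apply/eqP.
  have -> : e1 - - ((t1 * e2 - t2 * e1) / (t1 * t1 + t2 * t2)) * t2
          = t1 * dot2 (e1, e2) (t1, t2) / (t1 * t1 + t2 * t2).
    rewrite /dot2 /=; field; exact h.
  by rewrite hd mulr0 mul0r.
- apply/eqP; rewrite -subr_eq0; apply/eqP.
  have -> : e2 - ((t1 * e2 - t2 * e1) / (t1 * t1 + t2 * t2)) * t1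
          = t2 * dot2 (e1, e2) (t1, t2) / (t1 * t1 + t2 * t2).
    rewrite /dot2 /=; field; exact h.
  by rewrite hd mulr0 mul0r.
Qed.

Lemma det3_plane x y z (g : R * R) : pz x = hgt g x -> pz y = hgt g y ->
  det3 x y z = gdet x y * (pz z - hgt g z).
Proof.
case: g => g1 g2 hx hy; rewrite /det3 /dot /cross /gdet /hgt /=.
rewrite hx hy /hgt /=; ring.
Qed.

Definition qq (g0 g1 g2 g3 : R * R) :=
  (det2 (dif g1 g0) (dif g2 g1), det2 (dif g2 g1) (dif g3 g2),
   det2 (dif g3 g2) (dif g0 g3), det2 (dif g0 g3) (dif g1 g0)).

Definition allsame (q : R * R * R * R) :=
  let: (q1, q2, q3, q4) := q in
  (0 < q1 /\ 0 < q2 /\ 0 < q3 /\ 0 < q4) \/ (q1 < 0 /\ q2 < 0 /\ q3 < 0 /\ q4 < 0).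


Lemma same_via (x y k : R) : 0 < x * k -> 0 < y * k -> 0 < x * y.
Proof. by move=> h1 h2; apply: (@trans_sign _ k); rewrite // mulrC. Qed.
Lemma div_sign (x y : R) : 0 < x * y -> 0 < y -> 0 < x.
Proof. move=> h1 h2; nra. Qed.
Lemma nsq_nz (a b : R) : a != 0 \/ b != 0 -> a * a + b * b != 0.
Proof.
have ha : 0 <= a * a by rewrite -expr2 sqr_ge0.
have hb : 0 <= b * b by rewrite -expr2 sqr_ge0.
move=> h; apply: lt0r_neq0; case: h => /sq_pos h; lra.
Qed.
Lemma gdet_nz_r u v : gdet u v != 0 -> (top v).1 * (top v).1 + (top v).2 * (top v).2 != 0.
Proof.
move=> h; apply: nsq_nz; rewrite /top /=.
case: (eqVneq (px v) 0) => hx; last by left.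
case: (eqVneq (py v) 0) => hy; last by right.
by move: h; rewrite /gdet hx hy !mulr0 subrr eqxx.
Qed.
Lemma gdet_nz_l u v : gdet u v != 0 -> (top u).1 * (top u).1 + (top u).2 * (top u).2 != 0.
Proof.
move=> h; apply: nsq_nz; rewrite /top /=.
case: (eqVneq (px u) 0) => hx; last by left.
case: (eqVneq (py u) 0) => hy; last by right.
by move: h; rewrite /gdet hx hy !mul0r subrr eqxx.
Qed.

Lemma perp_hgt (g g' : R * R) d : pz d = hgt g d -> pz d = hgt g' d ->
  dot2 (dif g' g) (top d) = 0.
Proof.
case: g g' => a b [a' b'] h h'; rewrite /dot2 /dif /top /=.
move: h'; rewrite h /hgt /= => /eqP; rewrite eq_sym -subr_eq0 => /eqP <-; ring.
Qed.

Lemma cone_signs d1 d2 d3 d4 (g0 g1 g2 g3 : R * R) :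
  convex4 d1 d2 d3 d4 -> admissible4 d1 d2 d3 d4 ->
  pz d1 = hgt g0 d1 -> pz d2 = hgt g0 d2 ->
  pz d2 = hgt g1 d2 -> pz d3 = hgt g1 d3 ->
  pz d3 = hgt g2 d3 -> pz d4 = hgt g2 d4 ->
  pz d4 = hgt g3 d4 -> pz d1 = hgt g3 d1 ->
  allsame (qq g0 g1 g2 g3) /\ [/\ gdet d1 d2 != 0, gdet d2 d3 != 0, gdet d3 d4 != 0 & gdet d4 d1 != 0].
Proof.
move=> [h1 [h2 [h3 h4]]] [l1 [l2 [l3 [l4 [l1p [l2p [l3p [l4p]]]]]]]].
set w := padd _ _ => /= [[wx wy]].
move=> z01 z02 z12 z13 z23 z24 z34 z31.
set D1 := det3 d1 d2 d3. set D2 := det3 d2 d3 d4.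
set D3 := det3 d3 d4 d1. set D4 := det3 d4 d1 d2.
have E1 : det3 d1 d2 d4 = D4 by rewrite /D4 /det3 /dot /cross /=; ring.
have E2 : det3 d2 d3 d1 = D1 by rewrite /D1 /det3 /dot /cross /=; ring.
have E3 : det3 d3 d4 d2 = D2 by rewrite /D2 /det3 /dot /cross /=; ring.
have E4 : det3 d4 d1 d3 = D3 by rewrite /D3 /det3 /dot /cross /=; ring.
rewrite E1 in h1; rewrite E2 in h2; rewrite E3 in h3; rewrite E4 in h4.
have wz : forall x y, det3 x y (padd (padd (pscale l1 d1) (pscale l2 d2))
                  (padd (pscale l3 d3) (pscale l4 d4))) = gdet x y * pz w.
  move=> x y; move: wx wy; rewrite /w /det3 /dot /cross /gdet /= => wx wy.
  rewrite wx wy; ring.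
have c1w : gdet d1 d2 * pz w = l3 * D1 + l4 * D4.
  rewrite -wz -E1 /D1 /det3 /dot /cross /=; ring.
have c2w : gdet d2 d3 * pz w = l4 * D2 + l1 * D1.
  rewrite -wz -E2 /D2 /det3 /dot /cross /=; ring.
have c3w : gdet d3 d4 * pz w = l1 * D3 + l2 * D2.
  rewrite -wz -E3 /D3 /det3 /dot /cross /=; ring.
have c4w : gdet d4 d1 * pz w = l2 * D4 + l3 * D3.
  rewrite -wz -E4 /D4 /det3 /dot /cross /=; ring.
have D11 : 0 < D1 * D1 by apply: sq_pos; apply: pos_prod_r h2.
have D21 : 0 < D2 * D1 by [].
have D31 : 0 < D3 * D1 by apply: (trans_sign h3).
have D41 : 0 < D4 * D1 by rewrite mulrC.
have pos2 : forall a b x y, 0 < a -> 0 < b -> 0 < x * D1 -> 0 < y * D1 ->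
    0 < (a * x + b * y) * D1.
  move=> a b x y ha hb hx hy; rewrite mulrDl -!mulrA.
  by apply: addr_gt0; apply: mulr_gt0.
have k1 : 0 < gdet d1 d2 * (pz w * D1) by rewrite mulrA c1w; apply: pos2.
have k2 : 0 < gdet d2 d3 * (pz w * D1) by rewrite mulrA c2w; apply: pos2.
have k3 : 0 < gdet d3 d4 * (pz w * D1) by rewrite mulrA c3w; apply: pos2.
have k4 : 0 < gdet d4 d1 * (pz w * D1) by rewrite mulrA c4w; apply: pos2.
have nc1 := pos_prod k1; have nc2 := pos_prod k2.
have nc3 := pos_prod k3; have nc4 := pos_prod k4.
split; last by [].
have p1 := perp_param (gdet_nz_r nc1) (perp_hgt z02 z12).
have p2 := perp_param (gdet_nz_r nc2) (perp_hgt z13 z23).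
have p3 := perp_param (gdet_nz_r nc3) (perp_hgt z24 z34).
have p4 := perp_param (gdet_nz_r nc4) (perp_hgt z31 z01).
move: p1 p2 p3 p4.
set m1 := det2 _ (dif g1 g0) / _. set m2 := det2 _ (dif g2 g1) / _.
set m3 := det2 _ (dif g3 g2) / _. set m4 := det2 _ (dif g0 g3) / _.
move=> p1 p2 p3 p4.
have dD1 : D1 = gdet d1 d2 * m1 * gdet d2 d3.
  rewrite /D1 (det3_plane d3 z01 z02) z13.
  have -> : hgt g1 d3 - hgt g0 d3 = dot2 (dif g1 g0) (top d3).
    by rewrite /hgt /dot2 /dif /top /=; ring.
  by rewrite p1 /dot2 /top /gdet /=; ring.
have dD2 : D2 = gdet d2 d3 * m2 * gdet d3 d4.
  rewrite /D2 (det3_plane d4 z12 z13) z24.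
  have -> : hgt g2 d4 - hgt g1 d4 = dot2 (dif g2 g1) (top d4).
    by rewrite /hgt /dot2 /dif /top /=; ring.
  by rewrite p2 /dot2 /top /gdet /=; ring.
have dD3 : D3 = gdet d3 d4 * m3 * gdet d4 d1.
  rewrite /D3 (det3_plane d1 z23 z24) z31.
  have -> : hgt g3 d1 - hgt g2 d1 = dot2 (dif g3 g2) (top d1).
    by rewrite /hgt /dot2 /dif /top /=; ring.
  by rewrite p3 /dot2 /top /gdet /=; ring.
have dD4 : D4 = gdet d4 d1 * m4 * gdet d1 d2.
  rewrite /D4 (det3_plane d2 z34 z31) z02.
  have -> : hgt g0 d2 - hgt g3 d2 = dot2 (dif g0 g3) (top d2).
    by rewrite /hgt /dot2 /dif /top /=; ring.
  by rewrite p4 /dot2 /top /gdet /=; ring.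
rewrite /qq /= p1 p2 p3 p4 /det2 /=.
have -> : - m1 * (top d2).2 * (m2 * (top d3).1) - m1 * (top d2).1 * (- m2 * (top d3).2)
   = (m1 * m2) * gdet d2 d3 by rewrite /gdet /top /=; ring.
have -> : - m2 * (top d3).2 * (m3 * (top d4).1) - m2 * (top d3).1 * (- m3 * (top d4).2)
   = (m2 * m3) * gdet d3 d4 by rewrite /gdet /top /=; ring.
have -> : - m3 * (top d4).2 * (m4 * (top d1).1) - m3 * (top d4).1 * (- m4 * (top d1).2)
   = (m3 * m4) * gdet d4 d1 by rewrite /gdet /top /=; ring.
have -> : - m4 * (top d1).2 * (m1 * (top d2).1) - m4 * (top d1).1 * (- m1 * (top d2).2)
   = (m4 * m1) * gdet d1 d2 by rewrite /gdet /top /=; ring.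
set c1 := gdet d1 d2 in k1 dD1 dD4 *; set c2 := gdet d2 d3 in k2 dD1 dD2 *.
set c3 := gdet d3 d4 in k3 dD2 dD3 *; set c4 := gdet d4 d1 in k4 dD3 dD4 *.
have c12 := same_via k1 k2; have c13 := same_via k1 k3; have c14 := same_via k1 k4.
have c23 := same_via k2 k3; have c34 := same_via k3 k4.
have cc : forall a b x y : R, 0 < a * x -> 0 < b * y -> 0 < (a * b) * (x * y).
  move=> a b x y ha hb; rewrite (_ : a * b * (x * y) = (a * x) * (b * y)); last by ring.
  exact: mulr_gt0.
have mm : forall (ma mb ca cb : R), 0 < ca * cb -> 0 < (ca * ma) * (cb * mb) -> 0 < ma * mb.
  move=> ma mb ca cb h h'; apply: (@div_sign _ (ca * cb)); last by [].
  by rewrite (_ : ma * mb * (ca * cb) = (ca * ma) * (cb * mb)) //; ring.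
have e1 : 0 < (c1 * c2 * m1) * (c2 * c3 * m2).
  have -> : (c1 * c2 * m1) * (c2 * c3 * m2) = D2 * D1 by rewrite dD1 dD2; ring.
  exact D21.
have e2 : 0 < (c2 * c3 * m2) * (c3 * c4 * m3).
  have -> : (c2 * c3 * m2) * (c3 * c4 * m3) = D3 * D2 by rewrite dD3 dD2; ring.
  exact h3.
have e3 : 0 < (c3 * c4 * m3) * (c4 * c1 * m4).
  have -> : (c3 * c4 * m3) * (c4 * c1 * m4) = D4 * D3 by rewrite dD3 dD4; ring.
  exact h4.
have e4 : 0 < (c4 * c1 * m4) * (c1 * c2 * m1).
  have -> : (c4 * c1 * m4) * (c1 * c2 * m1) = D4 * D1 by rewrite dD4 dD1; ring.
  exact D41.
have m12 : 0 < m1 * m2 by apply: (mm _ _ (c1 * c2) (c2 * c3)) => //; apply: cc.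
have m23 : 0 < m2 * m3 by apply: (mm _ _ (c2 * c3) (c3 * c4)) => //; apply: cc.
have m34 : 0 < m3 * m4 by apply: (mm _ _ (c3 * c4) (c4 * c1)) => //; apply: cc; rewrite // mulrC.
have m41 : 0 < m4 * m1 by apply: (mm _ _ (c4 * c1) (c1 * c2)) => //; apply: cc; rewrite // mulrC.
have [c1p|c1n] : 0 < c1 \/ c1 < 0.
  by case: (ltgtP c1 0) => h; [right|left|move: nc1; rewrite -/c1 h eqxx].
- left.
  have c2p : 0 < c2 by apply: (div_sign (y:=c1)); rewrite // mulrC.
  have c3p : 0 < c3 by apply: (div_sign (y:=c1)); rewrite // mulrC.
  have c4p : 0 < c4 by apply: (div_sign (y:=c1)); rewrite // mulrC.
  by split; [|split; [|split]]; apply: mulr_gt0.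
- right.
  have neg : forall x, 0 < c1 * x -> x < 0.
    move=> x hx; nra.
  have c2n := neg _ c12; have c3n := neg _ c13; have c4n := neg _ c14.
  by split; [|split; [|split]]; rewrite pmulr_rlt0.
Qed.

End P.

Section P.
Variable R : realType.
Implicit Types (u v w A P V : pt R).

Lemma cone_gdet (d1 d2 d3 d4 : pt R) :
  convex4 d1 d2 d3 d4 -> admissible4 d1 d2 d3 d4 ->
  [/\ gdet d1 d2 != 0, gdet d2 d3 != 0, gdet d3 d4 != 0 & gdet d4 d1 != 0].
Proof.
move=> [h1 [h2 [h3 h4]]] [l1 [l2 [l3 [l4 [l1p [l2p [l3p [l4p]]]]]]]].
set w := padd _ _ => /= [[wx wy]].
set D1 := det3 d1 d2 d3. set D2 := det3 d2 d3 d4.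
set D3 := det3 d3 d4 d1. set D4 := det3 d4 d1 d2.
have E1 : det3 d1 d2 d4 = D4 by rewrite /D4 /det3 /dot /cross /=; ring.
have E2 : det3 d2 d3 d1 = D1 by rewrite /D1 /det3 /dot /cross /=; ring.
have E3 : det3 d3 d4 d2 = D2 by rewrite /D2 /det3 /dot /cross /=; ring.
have E4 : det3 d4 d1 d3 = D3 by rewrite /D3 /det3 /dot /cross /=; ring.
rewrite E1 in h1; rewrite E2 in h2; rewrite E3 in h3; rewrite E4 in h4.
have wz : forall x y, det3 x y (padd (padd (pscale l1 d1) (pscale l2 d2))
                  (padd (pscale l3 d3) (pscale l4 d4))) = gdet x y * pz w.
  move=> x y; move: wx wy; rewrite /w /det3 /dot /cross /gdet /= => wx wy.
  rewrite wx wy; ring.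
have c1w : gdet d1 d2 * pz w = l3 * D1 + l4 * D4.
  rewrite -wz -E1 /D1 /det3 /dot /cross /=; ring.
have c2w : gdet d2 d3 * pz w = l4 * D2 + l1 * D1.
  rewrite -wz -E2 /D2 /det3 /dot /cross /=; ring.
have c3w : gdet d3 d4 * pz w = l1 * D3 + l2 * D2.
  rewrite -wz -E3 /D3 /det3 /dot /cross /=; ring.
have c4w : gdet d4 d1 * pz w = l2 * D4 + l3 * D3.
  rewrite -wz -E4 /D4 /det3 /dot /cross /=; ring.
have D11 : 0 < D1 * D1 by apply: sq_pos; apply: pos_prod_r h2.
have D21 : 0 < D2 * D1 by [].
have D31 : 0 < D3 * D1 by apply: (trans_sign h3).
have D41 : 0 < D4 * D1 by rewrite mulrC.
have pos2 : forall a b x y : R, 0 < a -> 0 < b -> 0 < x * D1 -> 0 < y * D1 ->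
    0 < (a * x + b * y) * D1.
  move=> a b x y ha hb hx hy; rewrite mulrDl -!mulrA.
  by apply: addr_gt0; apply: mulr_gt0.
have k1 : 0 < gdet d1 d2 * (pz w * D1) by rewrite mulrA c1w; apply: pos2.
have k2 : 0 < gdet d2 d3 * (pz w * D1) by rewrite mulrA c2w; apply: pos2.
have k3 : 0 < gdet d3 d4 * (pz w * D1) by rewrite mulrA c3w; apply: pos2.
have k4 : 0 < gdet d4 d1 * (pz w * D1) by rewrite mulrA c4w; apply: pos2.
by split; apply: pos_prod; [exact k1|exact k2|exact k3|exact k4].
Qed.

Definition onp (g : R * R) A P := pz P = pz A + hgt g (psub P A).

Lemma aspan_onp A u v P : gdet u v != 0 -> (aspan A u v P <-> onp (grad u v) A P).
Proof.
move=> h; rewrite (aspan_np A h P) /onp /hgt /=.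
split => ->; ring.
Qed.

Lemma onp_diff g A P Q : onp g A P -> onp g A Q -> pz Q - pz P = hgt g (psub Q P).
Proof. case: g => a b; rewrite /onp /hgt /= => -> ->; ring. Qed.

Lemma same_set_gdet V d d' A u v : same_set (aspan V d d') (aspan A u v) ->
  gdet d d' != 0 -> gdet u v != 0.
Proof.
move=> hs hd; apply: contraNneq hd => hu.
have mem : forall a b, exists x y, padd V (padd (pscale a d) (pscale b d'))
    = padd A (padd (pscale x u) (pscale y v)).
  move=> a b; have : aspan V d d' (padd V (padd (pscale a d) (pscale b d'))) by exists a, b.
  by move/hs => [x [y ->]]; exists x, y.
have [x0 [y0 e0]] := mem 0 0.
have [x1 [y1 e1]] := mem 1 0.
have [x2 [y2 e2]] := mem 0 1.
have ex : forall a b x y, padd V (padd (pscale a d) (pscale b d')) = padd A (padd (pscale x u) (pscale y v)) ->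
   px V + (a * px d + b * px d') = px A + (x * px u + y * px v) /\
   py V + (a * py d + b * py d') = py A + (x * py u + y * py v).
  by move=> a b x y e; split; [have := congr1 (@px R) e | have := congr1 (@py R) e].
have [a0 b0] := ex _ _ _ _ e0; have [a1 b1] := ex _ _ _ _ e1; have [a2 b2] := ex _ _ _ _ e2.
have -> : gdet d d' = ((x1 - x0) * (y2 - y0) - (y1 - y0) * (x2 - x0)) * gdet u v.
  have hdx : px d = (x1 - x0) * px u + (y1 - y0) * px v.
    move: a0 a1; rewrite !mul0r !mul1r !addr0 => a0 a1. rewrite !mulrBl. lra.
  have hdy : py d = (x1 - x0) * py u + (y1 - y0) * py v.
    move: b0 b1; rewrite !mul0r !mul1r !addr0 => b0 b1. rewrite !mulrBl. lra.
  have hd'x : px d' = (x2 - x0) * px u + (y2 - y0) * px v.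
    move: a0 a2; rewrite !mul0r !mul1r !addr0 !add0r => a0 a2. rewrite !mulrBl. lra.
  have hd'y : py d' = (x2 - x0) * py u + (y2 - y0) * py v.
    move: b0 b2; rewrite !mul0r !mul1r !addr0 !add0r => b0 b2. rewrite !mulrBl. lra.
  by rewrite /gdet hdx hdy hd'x hd'y; ring.
by rewrite hu mulr0.
Qed.

End P.

Section P.
Variable R : realType.
Implicit Types (u v w A P V : pt R) (F : nat -> nat -> pt R).

Definition fu F i j := psub (F i.+1 j) (F i j).
Definition fv F i j := psub (F i j.+1) (F i j).
Definition gF F i j := grad (fu F i j) (fv F i j).
Definition fgood F i j := gdet (fu F i j) (fv F i j) != 0.

Lemma face_corners F i j : convex_quad (F i j) (F i.+1 j) (F i.+1 j.+1) (F i j.+1) ->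
  fgood F i j ->
  [/\ onp (gF F i j) (F i j) (F i j), onp (gF F i j) (F i j) (F i.+1 j),
      onp (gF F i j) (F i j) (F i.+1 j.+1) & onp (gF F i j) (F i j) (F i j.+1)].
Proof.
move=> [hc _] h.
have hu := grad_u h; have hv := grad_v h.
rewrite /onp; split.
- by rewrite /hgt /=; ring.
- have -> : hgt (gF F i j) (psub (F i.+1 j) (F i j)) = pz (fu F i j) by rewrite hu.
  rewrite /fu /=; ring.
- have := det3_plane (psub (F i.+1 j.+1) (F i j)) hu hv.
  have -> : det3 (fu F i j) (fv F i j) (psub (F i.+1 j.+1) (F i j)) =
            - det3 (psub (F i.+1 j) (F i j)) (psub (F i.+1 j.+1) (F i j)) (psub (F i j.+1) (F i j)).
    by rewrite /fu /fv /det3 /dot /cross /=; ring.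
  rewrite hc oppr0 => /esym /eqP; rewrite mulf_eq0 (negbTE h) /= subr_eq0 => /eqP <-.
  rewrite /gF /=; ring.
- have -> : hgt (gF F i j) (psub (F i j.+1) (F i j)) = pz (fv F i j) by rewrite hv.
  rewrite /fv /=; ring.
Qed.

Lemma dir_rel V d d' (p : pt R -> Prop) (g : R * R) A :
  same_set (aspan V d d') p -> (forall P, p P <-> onp g A P) ->
  pz d = hgt g d /\ pz d' = hgt g d'.
Proof.
move=> hs hp.
have mem : forall a b, onp g A (padd V (padd (pscale a d) (pscale b d'))).
  by move=> a b; apply/hp/hs; exists a, b.
have h0 := mem 0 0; have h1 := mem 1 0; have h2 := mem 0 1.
have e1 := onp_diff h0 h1; have e2 := onp_diff h0 h2.
move: e1 e2; case: g {hp mem h0 h1 h2} => g1 g2; rewrite /hgt /= => e1 e2.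
split.
- have E : pz d = pz V + (1 * pz d + 0 * pz d') - (pz V + (0 * pz d + 0 * pz d')) by ring.
  by rewrite E e1; ring.
- have E : pz d' = pz V + (0 * pz d + 1 * pz d') - (pz V + (0 * pz d + 0 * pz d')) by ring.
  by rewrite E e2; ring.
Qed.

Lemma vertex_good m n F i j : dual_convex m n F -> nonboundary m n i.+1 j.+1 ->
  [/\ fgood F i.+1 j.+1, fgood F i j.+1, fgood F i j, fgood F i.+1 j &
      allsame (qq (gF F i.+1 j.+1) (gF F i j.+1) (gF F i j) (gF F i.+1 j))].
Proof.
move=> [_ [_ [_ hdc]]] hnb.
have [d1 [d2 [d3 [d4 [hc [ha [s0 [s1 [s2 s3]]]]]]]]] := hdc _ _ hnb.
have [g12 g23 g34 g41] := cone_gdet hc ha.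
have f0 : fgood F i.+1 j.+1 := same_set_gdet s0 g12.
have f1 : fgood F i j.+1 := same_set_gdet s1 g23.
have f2 : fgood F i j := same_set_gdet s2 g34.
have f3 : fgood F i.+1 j := same_set_gdet s3 g41.
split => //.
have [z01 z02] := dir_rel s0 (fun P => aspan_onp _ P f0).
have [z12 z13] := dir_rel s1 (fun P => aspan_onp _ P f1).
have [z23 z24] := dir_rel s2 (fun P => aspan_onp _ P f2).
have [z34 z31] := dir_rel s3 (fun P => aspan_onp _ P f3).
by have [] := cone_signs hc ha z01 z02 z12 z13 z23 z24 z34 z31.
Qed.

Lemma all_faces_good m n F i j : dual_convex m n F -> (i < m)%N -> (j < n)%N ->
  fgood F i j.
Proof.
move=> hd hi hj; have [hm [hn _]] := hd.
have nb : forall a b, (a < m.-1)%N -> (b < n.-1)%N -> nonboundary m n a.+1 b.+1.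
  move=> a b ha hb; rewrite /nonboundary; split; first by [].
  split; first by move: ha; case: m {hd hi hm} => //.
  split; first by [].
  by move: hb; case: n {hd hj hn} => //.
have hm1 : (0 < m.-1)%N by lia.
have hn1 : (0 < n.-1)%N by lia.
case: i hi => [|i] hi; case: j hj => [|j] hj.
- by have [_ _ h _ _] := vertex_good hd (nb 0%N 0%N hm1 hn1).
- have hj' : (j < n.-1)%N by lia.
  by have [_ h _ _ _] := vertex_good hd (nb 0%N j hm1 hj').
- have hi' : (i < m.-1)%N by lia.
  by have [_ _ _ h _] := vertex_good hd (nb i 0%N hi' hn1).
- have hi' : (i < m.-1)%N by lia.
  have hj' : (j < n.-1)%N by lia.
  by have [h _ _ _ _] := vertex_good hd (nb i j hi' hj').
Qed.

End P.

Section P.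
Variable R : realType.
Implicit Types (u v w A P V : pt R).

Lemma pair_eta (a : R * R) : (a.1, a.2) = a. Proof. by case: a. Qed.

Lemma iang_np (p q : pt R -> Prop) (G M : R * R) c c' :
  is_np p G.1 G.2 c -> is_np q M.1 M.2 c' -> iang p q = inorm2 (dif G M).
Proof. by move=> hp hq; rewrite /iang (dual_top hp) (dual_top hq). Qed.

Lemma par_perp (a b w : R * R) : a.1 * a.1 + a.2 * a.2 != 0 ->
  det2 a b = 0 -> dot2 a w = 0 -> dot2 b w = 0.
Proof.
move=> ha hab haw.
have : (a.1 * a.1 + a.2 * a.2) * dot2 b w = dot2 a b * dot2 a w + det2 a b * det2 a w.
  by rewrite /dot2 /det2; ring.
by rewrite hab haw mulr0 mul0r addr0 => /eqP; rewrite mulf_eq0 (negbTE ha) /= => /eqP.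
Qed.

Lemma det2_zero2 (a b x : R * R) : det2 a b != 0 -> det2 a x = 0 -> det2 b x = 0 -> x = (0, 0).
Proof.
move=> h hax hbx.
have e1 : det2 a b * x.1 = det2 x b * a.1 + det2 a x * b.1 by rewrite /det2; ring.
have e2 : det2 a b * x.2 = det2 x b * a.2 + det2 a x * b.2 by rewrite /det2; ring.
have hxb : det2 x b = 0 by move: hbx; rewrite /det2 => hbx; rewrite -oppr0 -hbx; ring.
move: e1 e2; rewrite hxb hax !mul0r addr0 => /eqP e1 /eqP e2.
move: e1 e2; rewrite !mulf_eq0 (negbTE h) /= => /eqP e1 /eqP e2.
by move: e1 e2; case: x {hax hbx hxb} => /= ? ? -> ->.
Qed.

Lemma nz_of_det2 (a b : R * R) : det2 a b != 0 -> a.1 * a.1 + a.2 * a.2 != 0.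
Proof.
move=> h; apply: nsq_nz.
case: (eqVneq a.1 0) => h1; last by left.
case: (eqVneq a.2 0) => h2; last by right.
by move: h; rewrite /det2 h1 h2 !mul0r subrr eqxx.
Qed.

Lemma det2_anti (a b : R * R) : det2 b a = - det2 a b.
Proof. by rewrite /det2; ring. Qed.

Definition perp (a : R * R) : R * R := (- a.2, a.1).

Lemma line_in (pa pb : pt R -> Prop) (Ga Gb M : R * R) ca cb V P :
  is_np pa Ga.1 Ga.2 ca -> is_np pb Gb.1 Gb.2 cb -> pa V -> pb V -> pa P -> pb P ->
  det2 (dif Gb Ga) (dif M Ga) = 0 ->
  (dif Gb Ga).1 * (dif Gb Ga).1 + (dif Gb Ga).2 * (dif Gb Ga).2 != 0 ->
  pz P = M.1 * px P + M.2 * py P + (pz V - hgt M V).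
Proof.
move=> ha hb aV bV aP bP hM hn.
have eaV := (ha V).1 aV; have ebV := (hb V).1 bV.
have eaP := (ha P).1 aP; have ebP := (hb P).1 bP.
have hw : dot2 (dif Gb Ga) (px P - px V, py P - py V) = 0.
  rewrite /dot2 /dif /=.
  have -> : (Gb.1 - Ga.1) * (px P - px V) + (Gb.2 - Ga.2) * (py P - py V)
     = (Gb.1 * px P + Gb.2 * py P + cb) - (Gb.1 * px V + Gb.2 * py V + cb)
       - ((Ga.1 * px P + Ga.2 * py P + ca) - (Ga.1 * px V + Ga.2 * py V + ca)) by ring.
  by rewrite -eaV -ebV -eaP -ebP; ring.
have := par_perp hn hM hw; rewrite /dot2 /dif /= => h.
rewrite eaP /hgt eaV.
have -> : Ga.1 * px P + Ga.2 * py P + ca = (Ga.1 * px V + Ga.2 * py V + ca) + (M.1 * px P + M.2 * py P - (M.1 * px V + M.2 * py V))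
   - ((M.1 - Ga.1) * (px P - px V) + (M.2 - Ga.2) * (py P - py V)) by ring.
by rewrite h subr0; ring.
Qed.

Lemma opp_ratio_iff (p1 p2 p3 p4 : pt R -> Prop) (G1 G2 G3 G4 M : R * R)
    (c1 c2 c3 c4 : R) V r :
  is_np p1 G1.1 G1.2 c1 -> is_np p2 G2.1 G2.2 c2 ->
  is_np p3 G3.1 G3.2 c3 -> is_np p4 G4.1 G4.2 c4 ->
  p1 V -> p2 V -> p3 V -> p4 V ->
  det2 (dif G3 G1) (dif M G1) = 0 -> det2 (dif G4 G2) (dif M G2) = 0 ->
  det2 (dif G3 G1) (dif G4 G2) != 0 ->
  (opp_ratio p1 p2 p3 p4 r <->
   r = inorm2 (dif G1 M) / inorm2 (dif G3 M) * (inorm2 (dif G4 M) / inorm2 (dif G2 M))).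
Proof.
move=> h1 h2 h3 h4 v1 v2 v3 v4 hM1 hM2 hdet.
have a13 := nz_of_det2 hdet.
have a24 : (dif G4 G2).1 * (dif G4 G2).1 + (dif G4 G2).2 * (dif G4 G2).2 != 0.
  by apply: (@nz_of_det2 _ (dif G3 G1)); rewrite det2_anti oppr_eq0.
split.
- move=> [p [[A0 [u [v [hn hp]]]] [hcont ->]]].
  have inp : forall P, p P -> dot (cross u v) (psub P A0) = 0.
    move=> P /hp [x [y ->]]; rewrite /dot /cross /=; ring.
  have pV : p V by apply: hcont; left.
  have [a ha] : {x : R * R | x = perp (dif G1 G3)} by eexists.
  set P1 := Pt (px V + a.1) (py V + a.2) (pz V + dot2 G1 a).
  have pP1 : p P1.
    apply: hcont; left; split.
    + apply/(h1 P1).2; rewrite /P1 /= ((h1 V).1 v1) /dot2 ha /perp /dif /=; ring.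
    + apply/(h3 P1).2; rewrite /P1 /= ((h3 V).1 v3) /dot2 ha /perp /dif /=; ring.
  have [b hb] : {x : R * R | x = perp (dif G2 G4)} by eexists.
  set P2 := Pt (px V + b.1) (py V + b.2) (pz V + dot2 G2 b).
  have pP2 : p P2.
    apply: hcont; right; split.
    + apply/(h2 P2).2; rewrite /P2 /= ((h2 V).1 v2) /dot2 hb /perp /dif /=; ring.
    + apply/(h4 P2).2; rewrite /P2 /= ((h4 V).1 v4) /dot2 hb /perp /dif /=; ring.
  have nV := inp _ pV; have n1 := inp _ pP1; have n2 := inp _ pP2.
  have ea : (cross u v).(px) * a.1 + (cross u v).(py) * a.2 + (cross u v).(pz) * dot2 G1 a = 0.
    rewrite (_ : _ + _ = dot (cross u v) (psub P1 A0) - dot (cross u v) (psub V A0)).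
      by rewrite n1 nV subrr.
    by rewrite /dot /P1 /=; ring.
  have eb : (cross u v).(px) * b.1 + (cross u v).(py) * b.2 + (cross u v).(pz) * dot2 G2 b = 0.
    rewrite (_ : _ + _ = dot (cross u v) (psub P2 A0) - dot (cross u v) (psub V A0)).
      by rewrite n2 nV subrr.
    by rewrite /dot /P2 /=; ring.
  have dab : det2 a b = det2 (dif G3 G1) (dif G4 G2) by rewrite ha hb /perp /dif /det2 /=; ring.
  have hg : gdet u v != 0.
    apply/negP => /eqP hz.
    have hz' : (cross u v).(pz) = 0 by [].
    rewrite hz' mul0r addr0 in ea; rewrite hz' mul0r addr0 in eb.
    have ex : (cross u v).(px) * det2 a b = 0.
      rewrite -[RHS](_ : b.2 * 0 - a.2 * 0 = 0); last by ring.
      by rewrite -{1}ea -eb /det2; ring.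
    have ey : (cross u v).(py) * det2 a b = 0.
      rewrite -[RHS](_ : a.1 * 0 - b.1 * 0 = 0); last by ring.
      by rewrite -{1}eb -ea /det2; ring.
    move: ex ey; rewrite dab => /eqP; rewrite mulf_eq0 (negbTE hdet) orbF => /eqP ex.
    move/eqP; rewrite mulf_eq0 (negbTE hdet) orbF => /eqP ey.
    by apply: hn; move: ex ey hz'; case: (cross u v) => /= ? ? ? -> -> ->.
  have npp : is_np p (grad u v).1 (grad u v).2 (pz A0 - hgt (grad u v) A0).
    by move=> P; rewrite -(aspan_np A0 hg P); exact: hp.
  move: npp; have [m ->] : {x : R * R | grad u v = x} by eexists.
  move=> npp.
  have em : dot2 (dif m G1) a = 0.
    have e1 := (npp _).1 pP1; have e0 := (npp _).1 pV.
    move: e1; rewrite /P1 /= e0 /dot2 /dif /= => e1.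
    lra.
  have em2 : dot2 (dif m G2) b = 0.
    have e1 := (npp _).1 pP2; have e0 := (npp _).1 pV.
    move: e1; rewrite /P2 /= e0 /dot2 /dif /= => e1.
    lra.
  have d1 : det2 (dif G3 G1) (dif m M) = 0.
    move: em hM1; rewrite ha /perp /dot2 /det2 /dif /= => em hM1.
    lra.
  have d2 : det2 (dif G4 G2) (dif m M) = 0.
    move: em2 hM2; rewrite hb /perp /dot2 /det2 /dif /= => em2 hM2.
    lra.
  have /eqP := det2_zero2 hdet d1 d2; rewrite /dif xpair_eqE !subr_eq0 => /andP [/eqP e1 /eqP e2].
  have mM : m = M by move: e1 e2; case: m {npp em em2 d1 d2} => ? ?; case: M {hM1 hM2} => ? ? /= -> ->.
  rewrite mM in npp.
  by rewrite (iang_np h1 npp) (iang_np h2 npp) (iang_np h3 npp) (iang_np h4 npp).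
- move=> ->.
  set cM := pz V - hgt M V.
  have npp : is_np (fun P => pz P = M.1 * px P + M.2 * py P + cM) M.1 M.2 cM by [].
  exists (fun P => pz P = M.1 * px P + M.2 * py P + cM); split; last split.
  + exists (Pt 0 0 cM), (Pt 1 0 M.1), (Pt 0 1 M.2); split.
      by rewrite /cross /= => -[] _ _ /eqP; rewrite !mulr0 !mul1r subr0 oner_eq0.
    have hg : gdet (Pt 1 0 M.1) (Pt 0 1 M.2) != 0.
      by rewrite /gdet /= mulr1 mulr0 subr0 oner_eq0.
    have := plane_np (Pt 0 0 cM) (g := M) hg.
    rewrite /hgt /= !mulr0 !mulr1 !addr0 !add0r subr0 => /(_ erefl erefl) hnp P.
    by rewrite (hnp P).
  + move=> P [[q1 q3]|[q2 q4]].
    * exact: (line_in h1 h3 v1 v3 q1 q3 hM1 a13).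
    * exact: (line_in h2 h4 v2 v4 q2 q4 hM2 a24).
  + by rewrite (iang_np h1 npp) (iang_np h2 npp) (iang_np h3 npp) (iang_np h4 npp).
Qed.

End P.

Section Q.
Variable R : realType.

Lemma inorm2_scale (k : R) (a : R * R) : inorm2 (k * a.1, k * a.2) = `|k| * inorm2 a.
Proof.
rewrite /inorm2 /=.
rewrite (_ : (k * a.1) ^+ 2 + (k * a.2) ^+ 2 = k ^+ 2 * (a.1 ^+ 2 + a.2 ^+ 2)); last by ring.
by rewrite sqrtrM ?sqr_ge0 // sqrtr_sqr.
Qed.

Lemma inorm2_gt0 (a : R * R) : a.1 * a.1 + a.2 * a.2 != 0 -> 0 < inorm2 a.
Proof.
move=> h; rewrite /inorm2 sqrtr_gt0 !expr2 lt_def h /=.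
by apply: addr_ge0; rewrite -expr2 sqr_ge0.
Qed.

Definition qa (g0 g1 g2 g3 : R * R) := det2 (dif g1 g0) (dif g2 g1).
Definition qb (g0 g1 g2 g3 : R * R) := det2 (dif g2 g1) (dif g3 g2).
Definition qc (g0 g1 g2 g3 : R * R) := det2 (dif g3 g2) (dif g0 g3).
Definition qd (g0 g1 g2 g3 : R * R) := det2 (dif g0 g3) (dif g1 g0).
Variables g0 g1 g2 g3 : R * R.
Let Q1 := qa g0 g1 g2 g3.
Let Q2 := qb g0 g1 g2 g3.
Let Q3 := qc g0 g1 g2 g3.
Let Q4 := qd g0 g1 g2 g3.
Definition sM := Q4 / (Q1 + Q3).
Definition tM := Q1 / (Q1 + Q3).
Definition Mq : R * R := (g0.1 + sM * (g2.1 - g0.1), g0.2 + sM * (g2.2 - g0.2)).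

Lemma sum13 : Q1 + Q3 = Q2 + Q4.
Proof. by rewrite /Q1 /Q2 /Q3 /Q4 /qa /qb /qc /qd /det2 /dif /=; ring. Qed.
Lemma det_diagq : det2 (dif g2 g0) (dif g3 g1) = Q1 + Q3.
Proof. by rewrite /Q1 /Q3 /qa /qc /det2 /dif /=; ring. Qed.

Hypothesis hs : allsame (qq g0 g1 g2 g3).

Lemma qpos : 0 < Q1 * Q2 /\ 0 < Q1 * Q3 /\ 0 < Q1 * Q4 /\ 0 < Q2 * Q3 /\ 0 < Q2 * Q4 /\ 0 < Q3 * Q4.
Proof.
move: hs; rewrite /allsame /qq /Q1 /Q2 /Q3 /Q4 /qa /qb /qc /qd.
case=> [[h1 [h2 [h3 h4]]]|[h1 [h2 [h3 h4]]]];
  (do ! split); try (by apply: mulr_gt0); by rewrite nmulr_rgt0.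
Qed.

Lemma pdivp (x y : R) : 0 < x * y -> 0 < x / y.
Proof.
move=> h; have hy := pos_prod_r h.
rewrite (_ : x / y = (x * y) / (y * y)); last by field.
by apply: divr_gt0 => //; apply: sq_pos.
Qed.

Lemma q_nz : Q1 != 0 /\ Q2 != 0 /\ Q3 != 0 /\ Q4 != 0 /\ Q1 + Q3 != 0.
Proof.
have [p12 [p13 [p14 [p23 [p24 p34]]]]] := qpos.
do ! split; [exact: pos_prod p12 | exact: pos_prod p23 | exact: pos_prod p34 | exact: pos_prod_r p14|].
have : 0 < Q1 * (Q1 + Q3).
  rewrite mulrDr; apply: addr_gt0 => //; apply: sq_pos; exact: pos_prod p12.
exact: pos_prod_r.
Qed.

Lemma q13p : 0 < Q1 * (Q1 + Q3) /\ 0 < Q2 * (Q1 + Q3) /\ 0 < Q3 * (Q1 + Q3) /\ 0 < Q4 * (Q1 + Q3).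
Proof.
have [p12 [p13 [p14 [p23 [p24 p34]]]]] := qpos.
have [n1 [n2 [n3 [n4 _]]]] := q_nz.
have s1 : 0 < Q1 * Q1 by apply: sq_pos.
have s3 : 0 < Q3 * Q3 by apply: sq_pos.
have E : forall k, k * (Q1 + Q3) = k * Q1 + k * Q3 by move=> k; rewrite mulrDr.
rewrite !E; split; [|split; [|split]]; apply: addr_gt0; rewrite // mulrC //.
Qed.

Lemma Mq_alt : Mq = (g1.1 + tM * (g3.1 - g1.1), g1.2 + tM * (g3.2 - g1.2)).
Proof.
have [_ [_ [_ [_ h]]]] := q_nz.
move: h; rewrite /Mq /sM /tM /Q1 /Q2 /Q3 /Q4 /qa /qb /qc /qd /det2 /dif /= => h.
by congr pair; field.
Qed.

Lemma one_sM : 1 - sM = Q2 / (Q1 + Q3).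
Proof.
have [_ [_ [_ [_ h]]]] := q_nz.
by rewrite /sM -{1}(divff h) -mulrBl {1}sum13 addrK.
Qed.
Lemma one_tM : 1 - tM = Q3 / (Q1 + Q3).
Proof. have [_ [_ [_ [_ h]]]] := q_nz. by rewrite /tM; field. Qed.

Lemma st_pos : 0 < sM /\ 0 < 1 - sM /\ 0 < tM /\ 0 < 1 - tM.
Proof.
have [h1 [h2 [h3 h4]]] := q13p.
by rewrite one_sM one_tM /sM /tM; do ! split; apply: pdivp.
Qed.

Lemma N02_pos : 0 < inorm2 (dif g2 g0).
Proof.
have [_ [_ [_ [_ h]]]] := q_nz; apply: inorm2_gt0; apply: (nz_of_det2 (b := dif g3 g1)).
by rewrite det_diagq.
Qed.
Lemma N13_pos : 0 < inorm2 (dif g3 g1).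
Proof.
have [_ [_ [_ [_ h]]]] := q_nz; apply: inorm2_gt0; apply: (nz_of_det2 (b := dif g2 g0)).
by rewrite det2_anti oppr_eq0 det_diagq.
Qed.

Lemma A0v : inorm2 (dif g0 Mq) = sM * inorm2 (dif g2 g0).
Proof.
have [hs0 _] := st_pos.
rewrite -(gtr0_norm hs0) -normrN -inorm2_scale; congr inorm2.
by rewrite /Mq /dif /=; congr pair; ring.
Qed.
Lemma A2v : inorm2 (dif g2 Mq) = (1 - sM) * inorm2 (dif g2 g0).
Proof.
have [_ [hs0 _]] := st_pos.
rewrite -(gtr0_norm hs0) -inorm2_scale; congr inorm2.
by rewrite /Mq /dif /=; congr pair; ring.
Qed.
Lemma A1v : inorm2 (dif g1 Mq) = tM * inorm2 (dif g3 g1).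
Proof.
have [_ [_ [hs0 _]]] := st_pos.
rewrite -(gtr0_norm hs0) -normrN -inorm2_scale Mq_alt; congr inorm2.
by rewrite /dif /=; congr pair; ring.
Qed.
Lemma A3v : inorm2 (dif g3 Mq) = (1 - tM) * inorm2 (dif g3 g1).
Proof.
have [_ [_ [_ hs0]]] := st_pos.
rewrite -(gtr0_norm hs0) -inorm2_scale Mq_alt; congr inorm2.
by rewrite /dif /=; congr pair; ring.
Qed.

End Q.

Section P.
Variable R : realType.
Implicit Types (F : nat -> nat -> pt R).

Section Quad.
Variables g0 g1 g2 g3 : R * R.
Let M := Mq g0 g1 g2 g3.
Lemma L02 : det2 (dif g2 g0) (dif M g0) = 0.
Proof. by rewrite /M /Mq /det2 /dif /=; ring. Qed.
Lemma L20 : det2 (dif g0 g2) (dif M g2) = 0.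
Proof. by rewrite /M /Mq /det2 /dif /=; ring. Qed.
Hypothesis hs : allsame (qq g0 g1 g2 g3).
Lemma L13 : det2 (dif g3 g1) (dif M g1) = 0.
Proof. by rewrite /M (Mq_alt hs) /det2 /dif /=; ring. Qed.
Lemma L31 : det2 (dif g1 g3) (dif M g3) = 0.
Proof. by rewrite /M (Mq_alt hs) /det2 /dif /=; ring. Qed.
Lemma Dnz : [/\ det2 (dif g2 g0) (dif g3 g1) != 0, det2 (dif g3 g1) (dif g0 g2) != 0,
   det2 (dif g0 g2) (dif g1 g3) != 0 & det2 (dif g1 g3) (dif g2 g0) != 0].
Proof.
have [_ [_ [_ [_ h]]]] := q_nz hs.
have E : forall a b : R * R, det2 (dif b a) (dif a b) = 0 -> True by [].
rewrite -(det_diagq g0 g1 g2 g3) in h.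
split.
- exact: h.
- by move: h; apply: contraNneq => H; apply/eqP; rewrite -H /det2 /dif /=; ring.
- by move: h; apply: contraNneq => H; apply/eqP; rewrite -H /det2 /dif /=; ring.
- by move: h; apply: contraNneq => H; apply/eqP; rewrite -H /det2 /dif /=; ring.
Qed.

Definition rho (e : nat) : R :=
  let q1 := qa g0 g1 g2 g3 in let q2 := qb g0 g1 g2 g3 in
  let q3 := qc g0 g1 g2 g3 in let q4 := qd g0 g1 g2 g3 in
  match e with
  | 0 => q4 * q3 / (q2 * q1)
  | 1 => q4 * q1 / (q2 * q3)
  | 2 => q1 * q2 / (q3 * q4)
  | _ => q3 * q2 / (q1 * q4)
  end.

Lemma rho_vals :
  [/\ inorm2 (dif g0 M) / inorm2 (dif g2 M) * (inorm2 (dif g3 M) / inorm2 (dif g1 M)) = rho 0,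
      inorm2 (dif g1 M) / inorm2 (dif g3 M) * (inorm2 (dif g0 M) / inorm2 (dif g2 M)) = rho 1,
      inorm2 (dif g2 M) / inorm2 (dif g0 M) * (inorm2 (dif g1 M) / inorm2 (dif g3 M)) = rho 2 &
      inorm2 (dif g3 M) / inorm2 (dif g1 M) * (inorm2 (dif g2 M) / inorm2 (dif g0 M)) = rho 3].
Proof.
have [n1 [n2 [n3 [n4 n13]]]] := q_nz hs.
have N1 := lt0r_neq0 (N02_pos hs); have N2 := lt0r_neq0 (N13_pos hs).
rewrite /M (A0v hs) (A1v hs) (A2v hs) (A3v hs) (one_sM hs) (one_tM hs) /sM /tM /rho.
split; field; by rewrite ?n1 ?n2 ?n3 ?n4 ?n13 ?N1 ?N2.
Qed.
End Quad.

Lemma face_np F a b : fgood F a b ->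
  is_np (face F a b) (gF F a b).1 (gF F a b).2 (pz (F a b) - hgt (gF F a b) (F a b)).
Proof. exact: aspan_np. Qed.

Lemma face_mem F a b P : fgood F a b -> onp (gF F a b) (F a b) P -> face F a b P.
Proof. by move=> h /(aspan_onp _ _ h). Qed.

Definition gv F i j k := match k with
  | 0 => gF F i.+1 j.+1 | 1 => gF F i j.+1 | 2 => gF F i j | _ => gF F i.+1 j end.

Definition rhoV F i j e := rho (gv F i j 0) (gv F i j 1) (gv F i j 2) (gv F i j 3) e.

Lemma vopp_iff m n F i j e r : dual_convex m n F -> nonboundary m n i.+1 j.+1 -> (e < 4)%N ->
  (vopp_ratio F i.+1 j.+1 e r <-> r = rhoV F i j e).
Proof.
move=> hd hnb he.
have [f0 f1 f2 f3 hs] := vertex_good hd hnb.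
have [_ [_ [hnet _]]] := hd.
have [_ [him [_ hjn]]] := hnb.
have q00 := hnet i.+1 j.+1 him hjn.
have q10 := hnet i j.+1 (ltnW him) hjn.
have q11 := hnet i j (ltnW him) (ltnW hjn).
have q01 := hnet i.+1 j him (ltnW hjn).
have [c0 _ _ _] := face_corners q00 f0.
have [_ c1 _ _] := face_corners q10 f1.
have [_ _ c2 _] := face_corners q11 f2.
have [_ _ _ c3] := face_corners q01 f3.
have v0 := face_mem f0 c0; have v1 := face_mem f1 c1.
have v2 := face_mem f2 c2; have v3 := face_mem f3 c3.
have np0 := face_np f0; have np1 := face_np f1; have np2 := face_np f2; have np3 := face_np f3.
have [d0 d1 d2 d3] := Dnz hs.
have [r0 r1 r2 r3] := rho_vals hs.
rewrite /vopp_ratio /rhoV /=.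
case: e he => [|[|[|[|e]]]] // _ /=.
- apply: (iff_trans (opp_ratio_iff r np0 np1 np2 np3 v0 v1 v2 v3 (L02 _ _ _ _) (L13 hs) d0)).
  by rewrite r0.
- apply: (iff_trans (opp_ratio_iff r np1 np2 np3 np0 v1 v2 v3 v0 (L13 hs) (L20 _ _ _ _) d1)).
  by rewrite r1.
- apply: (iff_trans (opp_ratio_iff r np2 np3 np0 np1 v2 v3 v0 v1 (L20 _ _ _ _) (L31 hs) d2)).
  by rewrite r2.
- apply: (iff_trans (opp_ratio_iff r np3 np0 np1 np2 v3 v0 v1 v2 (L31 hs) (L02 _ _ _ _) d3)).
  by rewrite r3.
Qed.

End P.

Section L.
Variable R : realType.
Definition scale (k : R) (a : R * R) : R * R := (k * a.1, k * a.2).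

Lemma dif_scale (h h' g g' : R * R) k : dif h h' = scale k (dif g g') ->
  h.1 = h'.1 + k * (g.1 - g'.1) /\ h.2 = h'.2 + k * (g.2 - g'.2).
Proof.
case: h h' g g' => [a b] [a' b'] [c d] [c' d'] [/= e1 e2].
by split; [rewrite -e1 | rewrite -e2]; ring.
Qed.

Variables g0 g1 g2 g3 h0 h1 h2 h3 : R * R.
Variables m1 m2 m3 m4 : R.
Let q1 := qa g0 g1 g2 g3.
Let q2 := qb g0 g1 g2 g3.
Let q3 := qc g0 g1 g2 g3.
Let q4 := qd g0 g1 g2 g3.
Hypothesis r1 : dif h1 h0 = scale m1 (dif g1 g0).
Hypothesis r2 : dif h2 h1 = scale m2 (dif g2 g1).
Hypothesis r3 : dif h3 h2 = scale m3 (dif g3 g2).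

Lemma area_g : area4 g0 g1 g2 g3 = (q1 + q3) / 2.
Proof. by rewrite /area4 /q1 /q3 /qa /qc /det2 /dif /=; field. Qed.

Lemma mixed_form : mixed4 g0 g1 g2 g3 h0 h1 h2 h3 = (m1 * q4 + m2 * (q1 + q2) + m3 * q3) / 2.
Proof.
have [a1 b1] := dif_scale r1; have [a2 b2] := dif_scale r2; have [a3 b3] := dif_scale r3.
rewrite /mixed4 /det2 a3 b3 a2 b2 a1 b1 /q1 /q2 /q3 /q4 /qa /qb /qc /qd /det2 /dif /=.
by field.
Qed.

Lemma area_form : area4 h0 h1 h2 h3 = (m1 * m2 * q1 + m1 * m3 * (q4 - q1) + m2 * m3 * q2) / 2.
Proof.
have [a1 b1] := dif_scale r1; have [a2 b2] := dif_scale r2; have [a3 b3] := dif_scale r3.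
rewrite /area4 /det2 a3 b3 a2 b2 a1 b1 /q1 /q2 /q3 /q4 /qa /qb /qc /qd /det2 /dif /=.
by field.
Qed.

Hypothesis r4 : dif h0 h3 = scale m4 (dif g0 g3).

Lemma close_eqs : (m1 - m4) * q1 = (m3 - m4) * q2 /\ (m2 - m4) * q1 = - ((m3 - m4) * (q4 - q1)).
Proof.
have [a1 b1] := dif_scale r1; have [a2 b2] := dif_scale r2; have [a3 b3] := dif_scale r3.
have [a4 b4] := dif_scale r4.
have S1 : m1 * (g1.1 - g0.1) + m2 * (g2.1 - g1.1) + m3 * (g3.1 - g2.1) + m4 * (g0.1 - g3.1) = 0.
  by move: a4; rewrite a3 a2 a1 => /eqP; rewrite eq_sym -subr_eq0 => /eqP <-; ring.
have S2 : m1 * (g1.2 - g0.2) + m2 * (g2.2 - g1.2) + m3 * (g3.2 - g2.2) + m4 * (g0.2 - g3.2) = 0.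
  by move: b4; rewrite b3 b2 b1 => /eqP; rewrite eq_sym -subr_eq0 => /eqP <-; ring.
split; apply/eqP; rewrite -subr_eq0; apply/eqP.
- rewrite (_ : _ - _ = (m1 * (g1.1 - g0.1) + m2 * (g2.1 - g1.1) + m3 * (g3.1 - g2.1) + m4 * (g0.1 - g3.1)) * (g2.2 - g1.2)
                - (m1 * (g1.2 - g0.2) + m2 * (g2.2 - g1.2) + m3 * (g3.2 - g2.2) + m4 * (g0.2 - g3.2)) * (g2.1 - g1.1)).
    by rewrite S1 S2; ring.
  by rewrite /q1 /q2 /qa /qb /det2 /dif /=; ring.
- rewrite (_ : _ - _ = (m1 * (g1.2 - g0.2) + m2 * (g2.2 - g1.2) + m3 * (g3.2 - g2.2) + m4 * (g0.2 - g3.2)) * (g1.1 - g0.1)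
                - (m1 * (g1.1 - g0.1) + m2 * (g2.1 - g1.1) + m3 * (g3.1 - g2.1) + m4 * (g0.1 - g3.1)) * (g1.2 - g0.2)).
    by rewrite S1 S2; ring.
  by rewrite /q1 /q4 /qa /qd /det2 /dif /=; ring.
Qed.

End L.

Section S.
Variable R : realType.
Variables q1 q2 q3 q4 m1 m2 m3 m4 : R.
Hypotheses (n1 : q1 != 0) (n2 : q2 != 0) (hsum : q1 + q3 = q2 + q4).

Lemma solve_mu :
  (m1 - m4) * q1 = (m3 - m4) * q2 -> (m2 - m4) * q1 = - ((m3 - m4) * (q4 - q1)) ->
  m1 * q4 + m2 * (q1 + q2) + m3 * q3 = 0 ->
  [/\ m1 = - m4 * q3 / q1, m2 = m4 * q3 * q4 / (q1 * q2) & m3 = - m4 * q4 / q2].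
Proof.
have q3e : q3 = q2 + q4 - q1 by rewrite -hsum; ring.
move=> E1 E2 E3.
have K : m4 * (q1 + q3) + q2 * (m3 - m4) = 0.
  have -> : m4 * (q1 + q3) + q2 * (m3 - m4) =
     (m1 * q4 + m2 * (q1 + q2) + m3 * q3) / 2
     - q4 * ((m1 - m4) * q1 - (m3 - m4) * q2) / (2 * q1)
     - (q1 + q2) * ((m2 - m4) * q1 + (m3 - m4) * (q4 - q1)) / (2 * q1).
    by rewrite q3e; field.
  by rewrite E3 E1 E2; ring.
have hm3 : m3 = - m4 * q4 / q2.
  apply: (mulIf n2); rewrite mulfVK // -[LHS]subr0 -K q3e; ring.
have hm1 : m1 = - m4 * q3 / q1.
  apply: (mulIf n1); rewrite mulfVK //.
  have -> : m1 * q1 = (m1 - m4) * q1 + m4 * q1 by ring.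
  rewrite E1 hm3 q3e; field; by rewrite ?n1 ?n2.
have hm2 : m2 = m4 * q3 * q4 / (q1 * q2).
  apply: (mulIf n1).
  have -> : m2 * q1 = (m2 - m4) * q1 + m4 * q1 by ring.
  rewrite E2 hm3 q3e; field; by rewrite ?n1 ?n2.
by split.
Qed.

Lemma area_mu : m1 = - m4 * q3 / q1 -> m2 = m4 * q3 * q4 / (q1 * q2) -> m3 = - m4 * q4 / q2 ->
  m1 * m2 * q1 + m1 * m3 * (q4 - q1) + m2 * m3 * q2 = - m4 ^+ 2 * q3 * q4 * (q1 + q3) / (q1 * q2).
Proof.
have q3e : q3 = q2 + q4 - q1 by rewrite -hsum; ring.
move=> -> -> ->; rewrite q3e; field; by rewrite ?n1 ?n2.
Qed.

Lemma mixed_mu : m1 = - m4 * q3 / q1 -> m2 = m4 * q3 * q4 / (q1 * q2) -> m3 = - m4 * q4 / q2 ->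
  m1 * q4 + m2 * (q1 + q2) + m3 * q3 = 0.
Proof.
have q3e : q3 = q2 + q4 - q1 by rewrite -hsum; ring.
move=> -> -> ->; rewrite q3e; field; by rewrite ?n1 ?n2.
Qed.

End S.

Section P.
Variable R : realType.
Implicit Types (F G : nat -> nat -> pt R).

Lemma vpar_xy m n F G a b : v_parallel m n F G -> (a <= m)%N -> (b <= n)%N ->
  px (G a b) = px (F a b) /\ py (G a b) = py (F a b).
Proof.
move=> hv ha hb; have := hv a b ha hb; rewrite /top => -[-> ->]; by [].
Qed.

Lemma gdet_par m n F G i j : v_parallel m n F G -> (i < m)%N -> (j < n)%N ->
  gdet (fu G i j) (fv G i j) = gdet (fu F i j) (fv F i j).
Proof.
move=> hv hi hj.
have [x0 y0] := vpar_xy hv (ltnW hi) (ltnW hj).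
have [x1 y1] := vpar_xy hv hi (ltnW hj).
have [x2 y2] := vpar_xy hv (ltnW hi) hj.
by rewrite /gdet /fu /fv /= x0 y0 x1 y1 x2 y2.
Qed.

Lemma gauss_face F a b : fgood F a b -> top (dual_pl (face F a b)) = gF F a b.
Proof. exact: dual_aspan. Qed.

Lemma edge_perp (g g' : R * R) A A' P Q : onp g A P -> onp g A Q -> onp g' A' P -> onp g' A' Q ->
  dot2 (dif g' g) (top (psub Q P)) = 0.
Proof.
move=> h1 h2 h3 h4.
have e1 := onp_diff h1 h2; have e2 := onp_diff h3 h4.
move: e1 e2; clear h1 h2 h3 h4; case: g g' => a b [a' b']; rewrite /hgt /dot2 /dif /top /= => e e'; lra.
Qed.

Lemma par_exists (e e' t : R * R) : t.1 * t.1 + t.2 * t.2 != 0 ->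
  e.1 * e.1 + e.2 * e.2 != 0 -> dot2 e t = 0 -> dot2 e' t = 0 ->
  exists mu, e' = scale mu e.
Proof.
move=> ht he h1 h2.
have p1 := perp_param ht h1; have p2 := perp_param ht h2.
move: p1 p2.
set a := det2 t e / _; set b := det2 t e' / _ => p1 p2.
have ha : a != 0.
  apply: contraNneq he => a0; apply/eqP; rewrite p1 a0 /=; ring.
exists (b / a); rewrite p2 p1 /scale /=; congr pair; field; exact ha.
Qed.

Lemma scale_inj (k k' : R) (e : R * R) : e.1 * e.1 + e.2 * e.2 != 0 ->
  scale k e = scale k' e -> k = k'.
Proof.
case: e => a b /= he [e1 e2].
have : (k - k') * (a * a + b * b) = 0.
  by rewrite (_ : _ * _ = (k * a - k' * a) * a + (k * b - k' * b) * b); [rewrite e1 e2; ring | ring].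
by move/eqP; rewrite mulf_eq0 (negbTE he) orbF subr_eq0 => /eqP.
Qed.


Lemma top_psub_par m n F G a b c d : v_parallel m n F G -> (a <= m)%N -> (b <= n)%N ->
  (c <= m)%N -> (d <= n)%N -> top (psub (G a b) (G c d)) = top (psub (F a b) (F c d)).
Proof.
move=> hv ha hb hc hd.
have [x1 y1] := vpar_xy hv ha hb; have [x2 y2] := vpar_xy hv hc hd.
by rewrite /top /= x1 y1 x2 y2.
Qed.

Lemma vertex_mu m n F G i j : dual_convex m n F -> net m n G -> v_parallel m n F G ->
  nonboundary m n i.+1 j.+1 ->
  curv G i.+1 j.+1 = - curv F i.+1 j.+1 -> mixed_curv F G i.+1 j.+1 = 0 ->
  exists m1 m2 m3 m4,
  [/\ dif (gF G i j.+1) (gF G i.+1 j.+1) = scale m1 (dif (gF F i j.+1) (gF F i.+1 j.+1)),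
      dif (gF G i j) (gF G i j.+1) = scale m2 (dif (gF F i j) (gF F i j.+1)),
      dif (gF G i.+1 j) (gF G i j) = scale m3 (dif (gF F i.+1 j) (gF F i j)),
      dif (gF G i.+1 j.+1) (gF G i.+1 j) = scale m4 (dif (gF F i.+1 j.+1) (gF F i.+1 j)) &
      [/\ m4 ^+ 2 = (rhoV F i j 0)^-1, m1 ^+ 2 = (rhoV F i j 1)^-1,
          m2 ^+ 2 = (rhoV F i j 2)^-1 & m3 ^+ 2 = (rhoV F i j 3)^-1]].
Proof.
move=> hd hG hv hnb hcurv hmix.
have [f0 f1 f2 f3 hs] := vertex_good hd hnb.
have [_ [_ [hnet _]]] := hd.
have [_ [him [_ hjn]]] := hnb.
have him' := ltnW him; have hjn' := ltnW hjn.
have e0 : fgood G i.+1 j.+1 by rewrite /fgood (gdet_par hv him hjn).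
have e1 : fgood G i j.+1 by rewrite /fgood (gdet_par hv him' hjn).
have e2 : fgood G i j by rewrite /fgood (gdet_par hv him' hjn').
have e3 : fgood G i.+1 j by rewrite /fgood (gdet_par hv him hjn').
have [a00 a01 a02 a03] := face_corners (hnet _ _ him hjn) f0.
have [a10 a11 a12 a13] := face_corners (hnet _ _ him' hjn) f1.
have [a20 a21 a22 a23] := face_corners (hnet _ _ him' hjn') f2.
have [a30 a31 a32 a33] := face_corners (hnet _ _ him hjn') f3.
have [b00 b01 b02 b03] := face_corners (hG _ _ him hjn) e0.
have [b10 b11 b12 b13] := face_corners (hG _ _ him' hjn) e1.
have [b20 b21 b22 b23] := face_corners (hG _ _ him' hjn') e2.
have [b30 b31 b32 b33] := face_corners (hG _ _ him hjn') e3.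
have pF01 := edge_perp a00 a03 a11 a12.
have pG01 := edge_perp b00 b03 b11 b12.
have pF12 := edge_perp a10 a11 a23 a22.
have pG12 := edge_perp b10 b11 b23 b22.
have pF23 := edge_perp a21 a22 a30 a33.
have pG23 := edge_perp b21 b22 b30 b33.
have pF30 := edge_perp a33 a32 a00 a01.
have pG30 := edge_perp b33 b32 b00 b01.
have hi0 : (i <= m)%N by lia. have hj0 : (j <= n)%N by lia.
have hi1 : (i.+1 <= m)%N by lia. have hj1 : (j.+1 <= n)%N by lia.
rewrite (top_psub_par hv) // in pG01; rewrite (top_psub_par hv) // in pG12.
rewrite (top_psub_par hv) // in pG23; rewrite (top_psub_par hv) // in pG30.
have t01 := gdet_nz_r f0; have t12 := gdet_nz_l f1.
have t23 := gdet_nz_r f3; have t30 := gdet_nz_l f0.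
have [n1 [n2 [n3 [n4 n13]]]] := q_nz hs.
have ee1 := nz_of_det2 n1; have ee2 := nz_of_det2 n2.
have ee3 := nz_of_det2 n3; have ee4 := nz_of_det2 n4.
have [m1 r1] := par_exists t01 ee1 pF01 pG01.
have [m2 r2] := par_exists t12 ee2 pF12 pG12.
have [m3 r3] := par_exists t23 ee3 pF23 pG23.
have [m4 r4] := par_exists t30 ee4 pF30 pG30.
exists m1, m2, m3, m4; split => //.
move: hcurv hmix; rewrite /curv /mixed_curv /gauss /=.
rewrite !gauss_face //.
rewrite (area_form r1 r2 r3) (area_g) (mixed_form r1 r2 r3).
move=> hA hM.
have E3 : m1 * qd (gF F i.+1 j.+1) (gF F i j.+1) (gF F i j) (gF F i.+1 j)
    + m2 * (qa (gF F i.+1 j.+1) (gF F i j.+1) (gF F i j) (gF F i.+1 j)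
            + qb (gF F i.+1 j.+1) (gF F i j.+1) (gF F i j) (gF F i.+1 j))
    + m3 * qc (gF F i.+1 j.+1) (gF F i j.+1) (gF F i j) (gF F i.+1 j) = 0.
  by move: hM => /eqP; rewrite mulf_eq0 invr_eq0 pnatr_eq0 orbF => /eqP.
have [E1 E2] := close_eqs r1 r2 r3 r4.
have [h1 h2 h3] := solve_mu n1 n2 (sum13 _ _ _ _) E1 E2 E3.
have hA' := area_mu n1 n2 (sum13 _ _ _ _) h1 h2 h3.
rewrite hA' in hA.
move: h1 h2 h3 hA; rewrite /rhoV /rho /gv.
set q1 := qa _ _ _ _; set q2 := qb _ _ _ _; set q3 := qc _ _ _ _; set q4 := qd _ _ _ _.
move=> -> -> -> hA.
have hm4 : m4 ^+ 2 = q1 * q2 / (q3 * q4).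
  have : m4 ^+ 2 * (q3 * q4 * (q1 + q3)) = q1 * q2 * (q1 + q3).
    move: hA => /(congr1 (fun x => x * (- 2 * (q1 * q2)))).
    set L := (X in X = _ -> _); set RR := (X in _ = X -> _).
    have -> : L = m4 ^+ 2 * (q3 * q4 * (q1 + q3)) by rewrite /L; field; rewrite n1 n2.
    have -> : RR = q1 * q2 * (q1 + q3) by rewrite /RR; field.
    by [].
  move=> H; apply: (mulIf (x := q3 * q4 * (q1 + q3))).
    by rewrite !mulf_neq0.
  by rewrite H; field; rewrite n3 n4.
split.
- by rewrite hm4; field; rewrite n1 n2 n3 n4.
- rewrite (_ : - m4 * q3 / q1 = m4 * (- q3 / q1)); last by ring.
  by rewrite exprMn hm4; field; rewrite n1 n2 n3 n4.
- rewrite (_ : m4 * q3 * q4 / (q1 * q2) = m4 * (q3 * q4 / (q1 * q2))); last by ring.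
  by rewrite exprMn hm4; field; rewrite n1 n2 n3 n4.
- rewrite (_ : - m4 * q4 / q2 = m4 * (- q4 / q2)); last by ring.
  by rewrite exprMn hm4; field; rewrite n1 n2 n3 n4.
Qed.

End P.

Section P.
Variable R : realType.
Implicit Types (F G : nat -> nat -> pt R).

Lemma dif_swap (x y a b : R * R) k : dif x y = scale k (dif a b) -> dif y x = scale k (dif b a).
Proof.
case: x y a b => [x1 x2] [y1 y2] [a1 a2] [b1 b2] [/= e1 e2].
rewrite /dif /scale /=; congr pair.
- by rewrite -[y1 - x1]opprB e1; ring.
- by rewrite -[y2 - x2]opprB e2; ring.
Qed.

Lemma inv_eq_inj (a b : R) : a^-1 = b^-1 -> a = b.
Proof. by move=> h; rewrite -[a]invrK h invrK. Qed.

Lemma dir_back m n F : dual_convex m n F ->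
  (exists G : nat -> nat -> pt R,
     net m n G /\ v_parallel m n F G /\
     (forall i j, nonboundary m n i j ->
        curv G i j = - curv F i j /\ mixed_curv F G i j = 0)) ->
  equal_opp_ratios m n F.
Proof.
move=> hd [G [hG [hv hc]]]; split.
- move=> [|i] [|j] nb1 nb2; try (exfalso; move: nb1 => [? [? [? ?]]]; lia).
  have [c1 c2] := hc _ _ nb1; have [c1' c2'] := hc _ _ nb2.
  have [m1 [m2 [m3 [m4 [_ _ _ r4 [s4 _ _ _]]]]]] := vertex_mu hd hG hv nb1 c1 c2.
  have [k1 [k2 [k3 [k4 [_ r2 _ _ [_ _ t2 _]]]]]] := vertex_mu hd hG hv nb2 c1' c2'.
  have [_ _ _ _ hs] := vertex_good hd nb1.
  have [_ [_ [_ [n4 _]]]] := q_nz hs.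
  have e := dif_swap r2.
  have mk : m4 = k2 by apply: (scale_inj (nz_of_det2 n4)); rewrite -r4 -e.
  exists (rhoV F i j 0); split.
  + by apply/(vopp_iff _ hd nb1).
  + apply/(vopp_iff _ hd nb2) => //; apply: inv_eq_inj; rewrite -s4 -t2 mk //.
- move=> [|i] [|j] nb1 nb2; try (exfalso; move: nb1 => [? [? [? ?]]]; lia).
  have [c1 c2] := hc _ _ nb1; have [c1' c2'] := hc _ _ nb2.
  have [m1 [m2 [m3 [m4 [r1 _ _ _ [_ s1 _ _]]]]]] := vertex_mu hd hG hv nb1 c1 c2.
  have [k1 [k2 [k3 [k4 [_ _ r3 _ [_ _ _ t3]]]]]] := vertex_mu hd hG hv nb2 c1' c2'.
  have [_ _ _ _ hs] := vertex_good hd nb1.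
  have [n1 _] := q_nz hs.
  have e := dif_swap r3.
  have mk : m1 = k3 by apply: (scale_inj (nz_of_det2 n1)); rewrite -r1 -e.
  exists (rhoV F i j 1); split.
  + by apply/(vopp_iff _ hd nb1).
  + apply/(vopp_iff _ hd nb2) => //; apply: inv_eq_inj; rewrite -s1 -t3 mk //.
Qed.

End P.

Section C.
Variable R : realType.
Variables g0 g1 g2 g3 : R * R.
Local Notation q1 := (qa g0 g1 g2 g3).
Local Notation q2 := (qb g0 g1 g2 g3).
Local Notation q3 := (qc g0 g1 g2 g3).
Local Notation q4 := (qd g0 g1 g2 g3).
Definition aC : R := - Num.sqrt (q1 * q2 / (q3 * q4)).
Definition C1 := - aC * q3 / q1.
Definition C2 := aC * q3 * q4 / (q1 * q2).
Definition C3 := - aC * q4 / q2.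
Definition C4 := aC.

Hypothesis hs : allsame (qq g0 g1 g2 g3).

Lemma ratio_pos : 0 < q1 * q2 / (q3 * q4).
Proof.
have [p12 [p13 [p14 [p23 [p24 p34]]]]] := qpos hs.
by apply: divr_gt0.
Qed.

Lemma aC_sq : aC ^+ 2 = q1 * q2 / (q3 * q4).
Proof. by rewrite /aC sqrrN sqr_sqrtr // ltW // ratio_pos. Qed.

Lemma aC_neg : aC < 0.
Proof. by rewrite /aC oppr_lt0 sqrtr_gt0 ratio_pos. Qed.

Lemma C_signs : 0 < C1 /\ C2 < 0 /\ 0 < C3 /\ C4 < 0.
Proof.
have [p12 [p13 [p14 [p23 [p24 p34]]]]] := qpos hs.
have ha := aC_neg.
have na : 0 < - aC by rewrite oppr_gt0.
rewrite /C1 /C2 /C3 /C4; split; last split; last split => //.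
- by rewrite -mulrA; apply: mulr_gt0 => //; apply: pdivp; rewrite mulrC.
- have H : aC * (q3 * q4 / (q1 * q2)) < 0 by rewrite pmulr_llt0 // divr_gt0.
  by move: H; rewrite !mulrA => H; exact: H.
- rewrite -mulrA; apply: mulr_gt0 => //; apply: pdivp; rewrite mulrC //.
Qed.

Lemma C_sq : [/\ C4 ^+ 2 = (rho g0 g1 g2 g3 0)^-1, C1 ^+ 2 = (rho g0 g1 g2 g3 1)^-1,
   C2 ^+ 2 = (rho g0 g1 g2 g3 2)^-1 & C3 ^+ 2 = (rho g0 g1 g2 g3 3)^-1].
Proof.
have [n1 [n2 [n3 [n4 n13]]]] := q_nz hs.
have hA := aC_sq.
rewrite /C1 /C2 /C3 /C4 /rho.
split.
- by rewrite hA; field; rewrite n1 n2 n3 n4.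
- rewrite (_ : - aC * q3 / q1 = aC * (- q3 / q1)); last by ring.
  by rewrite exprMn hA; field; rewrite n1 n2 n3 n4.
- rewrite (_ : aC * q3 * q4 / (q1 * q2) = aC * (q3 * q4 / (q1 * q2))); last by ring.
  by rewrite exprMn hA; field; rewrite n1 n2 n3 n4.
- rewrite (_ : - aC * q4 / q2 = aC * (- q4 / q2)); last by ring.
  by rewrite exprMn hA; field; rewrite n1 n2 n3 n4.
Qed.

Lemma C_close_vec : C1 * (g1.1 - g0.1) + C2 * (g2.1 - g1.1) + C3 * (g3.1 - g2.1) + C4 * (g0.1 - g3.1) = 0
  /\ C1 * (g1.2 - g0.2) + C2 * (g2.2 - g1.2) + C3 * (g3.2 - g2.2) + C4 * (g0.2 - g3.2) = 0.
Proof.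
have [n1 [n2 _]] := q_nz hs.
move: n1 n2; rewrite /C1 /C2 /C3 /C4 /qa /qb /qc /qd /det2 /dif /= => n1 n2.
by split; field; rewrite ?n1 ?n2.
Qed.

Lemma C_close (h0 h1 h2 h3 : R * R) :
  dif h2 h1 = scale C2 (dif g2 g1) -> dif h3 h2 = scale C3 (dif g3 g2) ->
  dif h0 h3 = scale C4 (dif g0 g3) -> dif h1 h0 = scale C1 (dif g1 g0).
Proof.
move=> r2 r3 r4.
have [a2 b2] := dif_scale r2; have [a3 b3] := dif_scale r3; have [a4 b4] := dif_scale r4.
have [c1 c2] := C_close_vec.
rewrite /dif /scale /=; congr pair.
- rewrite a4 a3 a2; move: c1; clear; lra.
- rewrite b4 b3 b2; move: c2; clear; lra.
Qed.

Lemma C_curv (h0 h1 h2 h3 : R * R) :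
  dif h1 h0 = scale C1 (dif g1 g0) -> dif h2 h1 = scale C2 (dif g2 g1) ->
  dif h3 h2 = scale C3 (dif g3 g2) ->
  area4 h0 h1 h2 h3 = - area4 g0 g1 g2 g3 /\ mixed4 g0 g1 g2 g3 h0 h1 h2 h3 = 0.
Proof.
move=> r1 r2 r3.
have [n1 [n2 [n3 [n4 n13]]]] := q_nz hs.
have hsum := sum13 g0 g1 g2 g3.
have e1 : C1 = - C4 * q3 / q1 by rewrite /C1 /C4.
have e2 : C2 = C4 * q3 * q4 / (q1 * q2) by rewrite /C2 /C4.
have e3 : C3 = - C4 * q4 / q2 by rewrite /C3 /C4.
rewrite (area_form r1 r2 r3) (mixed_form r1 r2 r3) area_g.
split.
- rewrite (area_mu n1 n2 hsum e1 e2 e3) /C4 aC_sq; field; by rewrite ?n1 ?n2 ?n3 ?n4.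
- by rewrite (mixed_mu n1 n2 hsum e1 e2 e3) mul0r.
Qed.


End C.

Section G.
Variable R : realType.
Variables (m n : nat) (F : nat -> nat -> pt R).
Hypothesis hd : dual_convex m n F.
Hypothesis heq : equal_opp_ratios m n F.

Definition cv1 i j := C1 (gv F i j 0) (gv F i j 1) (gv F i j 2) (gv F i j 3).
Definition cv2 i j := C2 (gv F i j 0) (gv F i j 1) (gv F i j 2) (gv F i j 3).
Definition cv3 i j := C3 (gv F i j 0) (gv F i j 1) (gv F i j 2) (gv F i j 3).
Definition cv4 i j := C4 (gv F i j 0) (gv F i j 1) (gv F i j 2) (gv F i j 3).

Definition hl i j := if (j.+1 < n)%N then cv3 i j else cv1 i j.-1.
Definition vl i j := if (i.+1 < m)%N then cv2 i j else cv4 i.-1 j.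

Definition padd2 (a b : R * R) : R * R := (a.1 + b.1, a.2 + b.2).

Fixpoint grow (i : nat) : R * R :=
  match i with
  | 0 => (0, 0)
  | i'.+1 => padd2 (grow i') (scale (hl i' 0) (dif (gF F i'.+1 0) (gF F i' 0)))
  end.

Fixpoint gp (i j : nat) : R * R :=
  match j with
  | 0 => grow i
  | j'.+1 => padd2 (gp i j') (scale (vl i j') (dif (gF F i j'.+1) (gF F i j')))
  end.

Lemma dif_padd2 (a s : R * R) : dif (padd2 a s) a = s.
Proof. by case: a s => [a1 a2] [s1 s2]; rewrite /dif /padd2 /=; congr pair; ring. Qed.

Lemma Vrel i j : dif (gp i j.+1) (gp i j) = scale (vl i j) (dif (gF F i j.+1) (gF F i j)).
Proof. by rewrite /= dif_padd2. Qed.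

Lemma sq_inj_pos (a b : R) : 0 < a -> 0 < b -> a ^+ 2 = b ^+ 2 -> a = b.
Proof.
move=> ha hb /eqP; rewrite -subr_eq0 subr_sqr mulf_eq0 => /orP [/eqP h|/eqP h].
- by apply/eqP; rewrite -subr_eq0 h.
- have : 0 < a + b by apply: addr_gt0.
  by rewrite h ltxx.
Qed.

Lemma nb_of i j : (i.+1 < m)%N -> (j.+1 < n)%N -> nonboundary m n i.+1 j.+1.
Proof. by move=> hi hj; rewrite /nonboundary. Qed.

Lemma hcomp i j : (i.+1 < m)%N -> (j.+2 < n)%N -> cv3 i j.+1 = cv1 i j.
Proof.
move=> hi hj.
have nb1 := nb_of hi (ltnW hj); have nb2 := nb_of hi hj.
have [r [h1 h2]] := heq.2 _ _ nb1 nb2.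
have e1 := (vopp_iff _ hd nb1 (isT : (1 < 4)%N)).1 h1.
have e2 := (vopp_iff _ hd nb2 (isT : (3 < 4)%N)).1 h2.
have [_ _ _ _ hs1] := vertex_good hd nb1; have [_ _ _ _ hs2] := vertex_good hd nb2.
have [_ s1 _ _] := C_sq hs1; have [_ _ _ s3] := C_sq hs2.
have [p1 _] := C_signs hs1; have [_ [_ [p3 _]]] := C_signs hs2.
apply: sq_inj_pos => //.
rewrite /cv3 /cv1 s3 s1; congr (_^-1).
by rewrite -/(rhoV F i j.+1 3) -/(rhoV F i j 1) -e1 -e2.
Qed.

Lemma vcomp i j : (i.+2 < m)%N -> (j.+1 < n)%N -> cv2 i.+1 j = cv4 i j.
Proof.
move=> hi hj.
have nb1 := nb_of (ltnW hi) hj; have nb2 := nb_of hi hj.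
have [r [h1 h2]] := heq.1 _ _ nb1 nb2.
have e1 := (vopp_iff _ hd nb1 (isT : (0 < 4)%N)).1 h1.
have e2 := (vopp_iff _ hd nb2 (isT : (2 < 4)%N)).1 h2.
have [_ _ _ _ hs1] := vertex_good hd nb1; have [_ _ _ _ hs2] := vertex_good hd nb2.
have [s4 _ _ _] := C_sq hs1; have [_ _ s2 _] := C_sq hs2.
have [_ [_ [_ p4]]] := C_signs hs1; have [_ [p2 _]] := C_signs hs2.
rewrite -[LHS]opprK -[RHS]opprK; congr (- _).
apply: sq_inj_pos; rewrite ?oppr_gt0 //.
rewrite 2!sqrrN /cv2 /cv4 s4 s2; congr (_^-1).
by rewrite -/(rhoV F i.+1 j 2) -/(rhoV F i j 0) -e1 -e2.
Qed.


Lemma vl_eq2 i j : (i.+1 < m)%N -> vl i j = cv2 i j.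
Proof. by move=> h; rewrite /vl h. Qed.

Lemma vl_eq4 i j : (i.+1 < m)%N -> (j.+1 < n)%N -> vl i.+1 j = cv4 i j.
Proof.
move=> hi hj; rewrite /vl; case: ifP => h //.
exact: vcomp.
Qed.

Lemma hl_eq3 i j : (j.+1 < n)%N -> hl i j = cv3 i j.
Proof. by move=> h; rewrite /hl h. Qed.

Lemma hl_eq1 i j : (i.+1 < m)%N -> (j.+1 < n)%N -> hl i j.+1 = cv1 i j.
Proof.
move=> hi hj; rewrite /hl; case: ifP => h //.
exact: hcomp.
Qed.

Lemma Hrel i j : (i.+1 < m)%N -> (j < n)%N ->
  dif (gp i.+1 j) (gp i j) = scale (hl i j) (dif (gF F i.+1 j) (gF F i j)).
Proof.
move=> hi; elim: j => [|j IH] hj; first by rewrite /= dif_padd2.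
have hj' : (j < n)%N by apply: ltnW.
have nb := nb_of hi hj.
have [_ _ _ _ hs] := vertex_good hd nb.
have r3 := IH hj'; rewrite (hl_eq3 _ hj) in r3.
have r2 := dif_swap (Vrel i j); rewrite (vl_eq2 _ hi) in r2.
have r4 := Vrel i.+1 j; rewrite (vl_eq4 hi hj) in r4.
have r1 := C_close hs r2 r3 r4.
rewrite (hl_eq1 hi hj).
exact: (dif_swap r1).
Qed.

Lemma VR i j : (i.+1 < m)%N -> (j.+1 < n)%N ->
  [/\ dif (gp i j.+1) (gp i.+1 j.+1) = scale (cv1 i j) (dif (gF F i j.+1) (gF F i.+1 j.+1)),
      dif (gp i j) (gp i j.+1) = scale (cv2 i j) (dif (gF F i j) (gF F i j.+1)),
      dif (gp i.+1 j) (gp i j) = scale (cv3 i j) (dif (gF F i.+1 j) (gF F i j)) &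
      dif (gp i.+1 j.+1) (gp i.+1 j) = scale (cv4 i j) (dif (gF F i.+1 j.+1) (gF F i.+1 j))].
Proof.
move=> hi hj; split.
- by have := Hrel hi hj; rewrite (hl_eq1 hi hj) => /dif_swap.
- by have := dif_swap (Vrel i j); rewrite (vl_eq2 _ hi).
- by have := Hrel hi (ltnW hj); rewrite (hl_eq3 _ hj).
- by have := Vrel i.+1 j; rewrite (vl_eq4 hi hj).
Qed.

End G.

Section H.
Variable R : realType.
Implicit Types (A B C D X Y Z W P : pt R).

Lemma turn_dot (g : R * R) A X Y Z W : onp g A X -> onp g A Y -> onp g A Z -> onp g A W ->
  dot (turn X Y Z) (turn Y Z W) =
  det2 (top (psub Y X)) (top (psub Z Y)) * det2 (top (psub Z Y)) (top (psub W Z)) *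
  (g.1 * g.1 + g.2 * g.2 + 1).
Proof.
rewrite /onp /turn /dot /cross /det2 /top /hgt /= => -> -> -> ->; ring.
Qed.

Lemma det3_onp (g : R * R) A B C D : onp g A A -> onp g A B -> onp g A C -> onp g A D ->
  det3 (psub B A) (psub C A) (psub D A) = 0.
Proof.
rewrite /onp /det3 /dot /cross /hgt /= => _ -> -> ->; ring.
Qed.

Lemma sq1_pos (g : R * R) : 0 < g.1 * g.1 + g.2 * g.2 + 1.
Proof.
have h1 : 0 <= g.1 * g.1 by rewrite -expr2 sqr_ge0.
have h2 : 0 <= g.2 * g.2 by rewrite -expr2 sqr_ge0.
lra.
Qed.

Lemma turn_transfer (g g' : R * R) A A' X Y Z W X' Y' Z' W' :
  onp g A X -> onp g A Y -> onp g A Z -> onp g A W ->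
  onp g' A' X' -> onp g' A' Y' -> onp g' A' Z' -> onp g' A' W' ->
  top X' = top X -> top Y' = top Y -> top Z' = top Z -> top W' = top W ->
  0 < dot (turn X Y Z) (turn Y Z W) -> 0 < dot (turn X' Y' Z') (turn Y' Z' W').
Proof.
move=> h1 h2 h3 h4 h1' h2' h3' h4' t1 t2 t3 t4.
rewrite (turn_dot h1 h2 h3 h4) (turn_dot h1' h2' h3' h4') => hp.
have e : forall P Q P' Q', top P' = top P -> top Q' = top Q -> top (psub Q' P') = top (psub Q P).
  by move=> P Q P' Q'; rewrite /top /= => -[-> ->] [-> ->].
rewrite (e _ _ _ _ t1 t2) (e _ _ _ _ t2 t3) (e _ _ _ _ t3 t4).
apply: mulr_gt0; last exact: sq1_pos.
exact: (div_sign hp (sq1_pos g)).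
Qed.

Lemma grad_unique u v (g : R * R) : gdet u v != 0 -> pz u = hgt g u -> pz v = hgt g v ->
  grad u v = g.
Proof.
case: g => a b; rewrite /grad /gdet /hgt /= => h -> ->.
by congr pair; field.
Qed.

Lemma hgt_perp (g g' a b : R * R) k P : dif g' g = scale k (dif a b) -> dot2 (dif a b) (top P) = 0 ->
  hgt g' P = hgt g P.
Proof.
move=> /dif_scale [e1 e2]; rewrite /hgt /dot2 /top /dif /= e1 e2 => h.
rewrite (_ : _ + _ = g.1 * px P + g.2 * py P + k * ((a.1 - b.1) * px P + (a.2 - b.2) * py P)); last by ring.
by rewrite h mulr0 addr0.
Qed.

End H.

Section K.
Variable R : realType.
Variables (m n : nat) (F : nat -> nat -> pt R).
Hypothesis hd : dual_convex m n F.
Hypothesis heq : equal_opp_ratios m n F.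
Local Notation gq := (gp m n F).

Fixpoint Hrow (i : nat) : R :=
  match i with
  | 0 => 0
  | i'.+1 => Hrow i' + hgt (gq i' 0) (psub (F i'.+1 0) (F i' 0))
  end.
Definition fc i := if (i < m)%N then i else m.-1.
Fixpoint Hh (i j : nat) : R :=
  match j with
  | 0 => Hrow i
  | j'.+1 => Hh i j' + hgt (gq (fc i) j') (psub (F i j'.+1) (F i j'))
  end.
Definition Gn i j := Pt (px (F i j)) (py (F i j)) (Hh i j).

Lemma Fcorners a b : (a < m)%N -> (b < n)%N ->
  [/\ onp (gF F a b) (F a b) (F a b), onp (gF F a b) (F a b) (F a.+1 b),
      onp (gF F a b) (F a b) (F a.+1 b.+1) & onp (gF F a b) (F a b) (F a b.+1)].
Proof.
move=> ha hb; have [_ [_ [hnet _]]] := hd.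
exact: face_corners (hnet _ _ ha hb) (all_faces_good hd ha hb).
Qed.

Lemma PFv a b : (a.+1 < m)%N -> (b < n)%N ->
  dot2 (dif (gF F a.+1 b) (gF F a b)) (top (psub (F a.+1 b.+1) (F a.+1 b))) = 0.
Proof.
move=> ha hb.
have [_ c2 c3 _] := Fcorners (ltnW ha) hb.
have [c1 _ _ c4] := Fcorners ha hb.
exact: edge_perp c2 c3 c1 c4.
Qed.

Lemma PFh a b : (a < m)%N -> (b.+1 < n)%N ->
  dot2 (dif (gF F a b.+1) (gF F a b)) (top (psub (F a.+1 b.+1) (F a b.+1))) = 0.
Proof.
move=> ha hb.
have [_ _ c3 c4] := Fcorners ha (ltnW hb).
have [c1 c2 _ _] := Fcorners ha hb.
exact: edge_perp c4 c3 c1 c2.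
Qed.

Lemma Left a b : (a < m)%N -> Hh a b.+1 - Hh a b = hgt (gq a b) (psub (F a b.+1) (F a b)).
Proof. by move=> ha; rewrite /= /fc ha addrC addKr. Qed.

Lemma Right a b : (a < m)%N -> (b < n)%N ->
  Hh a.+1 b.+1 - Hh a.+1 b = hgt (gq a b) (psub (F a.+1 b.+1) (F a.+1 b)).
Proof.
move=> ha hb; rewrite /= addrC addKr /fc.
case: ifP => h.
- exact: (hgt_perp (Hrel hd heq h hb) (PFv h hb)).
- by have -> : m.-1 = a by lia.
Qed.

Lemma Bottom a b : (a < m)%N -> (b < n)%N ->
  Hh a.+1 b - Hh a b = hgt (gq a b) (psub (F a.+1 b) (F a b)).
Proof.
move=> ha; elim: b => [|b IH] hb; first by rewrite /= addrC addKr.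
have hb' : (b < n)%N by apply: ltnW.
have e1 := Right ha hb'; have e2 := IH hb'; have e3 := Left b ha.
have -> : Hh a.+1 b.+1 - Hh a b.+1 =
   (Hh a.+1 b.+1 - Hh a.+1 b) + (Hh a.+1 b - Hh a b) - (Hh a b.+1 - Hh a b) by ring.
rewrite e1 e2 e3.
have -> : hgt (gq a b) (psub (F a.+1 b.+1) (F a.+1 b)) + hgt (gq a b) (psub (F a.+1 b) (F a b))
   - hgt (gq a b) (psub (F a b.+1) (F a b)) = hgt (gq a b) (psub (F a.+1 b.+1) (F a b.+1)).
  by rewrite /hgt /=; ring.
apply: esym; exact: (hgt_perp (Vrel m n F a b) (PFh ha hb)).
Qed.

Lemma hgtG (g : R * R) a b c d : hgt g (psub (Gn c d) (Gn a b)) = hgt g (psub (F c d) (F a b)).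
Proof. by []. Qed.

Lemma Gcorners a b : (a < m)%N -> (b < n)%N ->
  [/\ onp (gq a b) (Gn a b) (Gn a b), onp (gq a b) (Gn a b) (Gn a.+1 b),
      onp (gq a b) (Gn a b) (Gn a.+1 b.+1) & onp (gq a b) (Gn a b) (Gn a b.+1)].
Proof.
move=> ha hb; rewrite /onp !hgtG.
have eB := Bottom ha hb; have eL := Left b ha; have eR := Right ha hb.
rewrite (_ : pz (Gn a b) = Hh a b) // (_ : pz (Gn a.+1 b) = Hh a.+1 b) //.
rewrite (_ : pz (Gn a.+1 b.+1) = Hh a.+1 b.+1) // (_ : pz (Gn a b.+1) = Hh a b.+1) //.
split.
- by rewrite /hgt /= !subrr !mulr0 addr0 addr0.
- by rewrite -eB; ring.
- have -> : Hh a.+1 b.+1 = Hh a b + (Hh a.+1 b - Hh a b) + (Hh a.+1 b.+1 - Hh a.+1 b) by ring.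
  by rewrite eB eR /hgt /=; ring.
- by rewrite -eL; ring.
Qed.

Lemma Gn_net : net m n Gn.
Proof.
move=> a b ha hb.
have [_ [_ [hnet _]]] := hd.
have [d0 [t1 [t2 [t3 t4]]]] := hnet _ _ ha hb.
have [f1 f2 f3 f4] := Fcorners ha hb.
have [g1 g2 g3 g4] := Gcorners ha hb.
split; first exact: det3_onp g1 g2 g3 g4.
split; first exact: (turn_transfer f1 f2 f3 f4 g1 g2 g3 g4).
split; first exact: (turn_transfer f2 f3 f4 f1 g2 g3 g4 g1).
split; first exact: (turn_transfer f3 f4 f1 f2 g3 g4 g1 g2).
exact: (turn_transfer f4 f1 f2 f3 g4 g1 g2 g3).
Qed.

Lemma Gn_par : v_parallel m n F Gn.
Proof. by []. Qed.

Lemma Gn_grad a b : (a < m)%N -> (b < n)%N -> top (dual_pl (face Gn a b)) = gq a b.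
Proof.
move=> ha hb.
have hg : fgood Gn a b by move: (all_faces_good hd ha hb); rewrite /fgood /gdet /fu /fv /=.
rewrite (gauss_face hg); apply: grad_unique => //.
- have [c1 c2 _ _] := Gcorners ha hb.
  by move: c2; rewrite /onp /fu /hgt /= => ->; ring.
- have [c1 _ _ c4] := Gcorners ha hb.
  by move: c4; rewrite /onp /fv /hgt /= => ->; ring.
Qed.

Lemma Gn_curv i j : nonboundary m n i j ->
  curv Gn i j = - curv F i j /\ mixed_curv F Gn i j = 0.
Proof.
case: i j => [|a] [|b] nb; try (exfalso; move: nb => [? [? [? ?]]]; lia).
have [_ [ha [_ hb]]] := nb.
have [f0 f1 f2 f3 hs] := vertex_good hd nb.
have ha' := ltnW ha; have hb' := ltnW hb.
rewrite /curv /mixed_curv /gauss /=.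
rewrite (Gn_grad ha hb) (Gn_grad ha' hb) (Gn_grad ha' hb') (Gn_grad ha hb').
rewrite !gauss_face //.
have [r1 r2 r3 r4] := VR hd heq ha hb.
exact: (C_curv hs r1 r2 r3).
Qed.

Lemma dir_fwd : exists G : nat -> nat -> pt R,
     net m n G /\ v_parallel m n F G /\
     (forall i j, nonboundary m n i j ->
        curv G i j = - curv F i j /\ mixed_curv F G i j = 0).
Proof.
exists Gn; split; first exact: Gn_net.
split; first exact: Gn_par.
exact: Gn_curv.
Qed.

End K.

Unset Implicit Arguments.

Theorem proposition5 (R : realType) (m n : nat) (F : nat -> nat -> pt R) :
  dual_convex m n F ->
  (equal_opp_ratios m n F <->
   exists G : nat -> nat -> pt R,
     net m n G /\ v_parallel m n F G /\
     (forall i j, nonboundary m n i j ->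
        curv G i j = - curv F i j /\ mixed_curv F G i j = 0)).
Proof.
move=> hd; split.
- move=> heq; exact: (dir_fwd hd heq).
- exact: dir_back hd.
Qed.
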